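(* Fix $r>0$ and $\phi,\phi_0\in[0,2\pi)$. For $z\in\mathbb C$ define $$s(z)=\frac{1}{2\pi}\Big(p_{R|R_0}(r\mid z)+\sum_{m\in\mathbb Z\setminus\{0\}}C_m(r,z)\,e^{jm(\phi-\phi_0-\gamma z^2\mathcal L)}\Big).$$ Here $p_{R|R_0}(r\mid z)=\frac{2r}{\sigma^2\mathcal L}e^{-\frac{r^2+z^2}{\sigma^2\mathcal L}}I_0\big(\frac{2rz}{\sigma^2\mathcal L}\big)$. For $m\ge1$, $C_m(r,z)=r b_m e^{-a_m(r^2+z^2)}I_m(2b_m zr)$, and $C_{-m}(r,z)=r\overline{b_m}e^{-\overline{a_m}(r^2+z^2)}I_m(2\overline{b_m}zr)$. Then the series converges uniformly on every bounded subset of $\mathbb C$, and $s$ is an entire function of $z$. For real $z=r_0\ge0$, $s(r_0)=p(r,\phi\mid r_0,\phi_0)$.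
   Context: Fix constants $\gamma>0$, $\sigma>0$, $\mathcal L>0$, and let $j=\sqrt{-1}$. For $m\in\mathbb N$ define $$a_m=\frac{\sqrt{jm\gamma}}{\sigma}\coth\!\big(\sqrt{jm\gamma\sigma^2}\,\mathcal L\big),\qquad b_m=\frac{\sqrt{jm\gamma}}{\sigma}\,\frac{1}{\sinh\!\big(\sqrt{jm\gamma\sigma^2}\,\mathcal L\big)},$$ with principal square roots. $I_m$ denotes the modified Bessel function of the first kind of order $m$, and $\overline{w}$ denotes the complex conjugate of $w$. The PZD channel conditional density (input polar coordinates $(r_0,\phi_0)$, output polar coordinates $(r,\phi)$) is $$p(r,\phi\mid r_0,\phi_0)=\frac{1}{2\pi}p_{R|R_0}(r\mid r_0)+\frac1\pi\sum_{m\ge1}\Re\!\Big(C_m(r,r_0)\,e^{jm(\phi-\phi_0-\gamma r_0^2\mathcal L)}\Big),$$ with $p_{R|R_0}$ and $C_m$ ($m\ge1$) as in the claim evaluated at real $z=r_0$. *)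

(* Defs.v *)
From Stdlib Require Import Reals Lra Factorial ClassicalEpsilon.
Open Scope R_scope.

Record CC := mkC { Re : R ; Im : R }.

Definition RtoC (x : R) : CC := mkC x 0.
Definition C0 : CC := RtoC 0.
Definition C1 : CC := RtoC 1.
Definition Cj : CC := mkC 0 1.
Definition Cadd (z w : CC) : CC := mkC (Re z + Re w) (Im z + Im w).
Definition Copp (z : CC) : CC := mkC (- Re z) (- Im z).
Definition Csub (z w : CC) : CC := Cadd z (Copp w).
Definition Cmul (z w : CC) : CC :=
  mkC (Re z * Re w - Im z * Im w) (Re z * Im w + Im z * Re w).
Definition Cinv (z : CC) : CC :=
  let d := Re z * Re z + Im z * Im z in mkC (Re z / d) (- Im z / d).
Definition Cdiv (z w : CC) : CC := Cmul z (Cinv w).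
Definition Cconj (z : CC) : CC := mkC (Re z) (- Im z).
Definition Cnorm (z : CC) : R := sqrt (Re z * Re z + Im z * Im z).
Fixpoint Cpow (z : CC) (n : nat) : CC :=
  match n with O => C1 | S n' => Cmul z (Cpow z n') end.

Definition Cexp (z : CC) : CC := mkC (exp (Re z) * cos (Im z)) (exp (Re z) * sin (Im z)).
Definition Csinh (z : CC) : CC := Cdiv (Csub (Cexp z) (Cexp (Copp z))) (RtoC 2).
Definition Ccosh (z : CC) : CC := Cdiv (Cadd (Cexp z) (Cexp (Copp z))) (RtoC 2).
Definition Ccoth (z : CC) : CC := Cdiv (Ccosh z) (Csinh z).

(* principal square root (branch cut on the negative real axis, Re >= 0) *)
Definition Csqrt (w : CC) : CC :=
  mkC (sqrt ((Cnorm w + Re w) / 2))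
      ((if Rle_dec 0 (Im w) then 1 else -1) * sqrt ((Cnorm w - Re w) / 2)).

Definition C_cv (u : nat -> CC) (l : CC) : Prop :=
  forall eps, eps > 0 -> exists N, forall n, (n >= N)%nat -> Cnorm (Csub (u n) l) < eps.

Fixpoint Csum (f : nat -> CC) (n : nat) : CC :=
  match n with O => C0 | S n' => Cadd (Csum f n') (f n') end.

Definition besselI_term (m : nat) (w : CC) (k : nat) : CC :=
  Cmul (RtoC (/ (INR (fact k) * INR (fact (k + m)))))
       (Cpow (Cdiv w (RtoC 2)) (2 * k + m)).
Definition besselI (m : nat) (w : CC) : CC :=
  epsilon (inhabits C0) (fun l => C_cv (fun n => Csum (besselI_term m w) n) l).

Section Channel.
Variables (gamma sigma LL : R).

Definition jmg (m : nat) : CC := mkC 0 (INR m * gamma).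
Definition a_coef (m : nat) : CC :=
  Cmul (Cdiv (Csqrt (jmg m)) (RtoC sigma))
       (Ccoth (Cmul (Csqrt (Cmul (jmg m) (RtoC (sigma * sigma)))) (RtoC LL))).
Definition b_coef (m : nat) : CC :=
  Cmul (Cdiv (Csqrt (jmg m)) (RtoC sigma))
       (Cinv (Csinh (Cmul (Csqrt (Cmul (jmg m) (RtoC (sigma * sigma)))) (RtoC LL)))).

Definition pRR0 (r : R) (z : CC) : CC :=
  let s2L := sigma * sigma * LL in
  Cmul (RtoC (2 * r / s2L))
   (Cmul (Cexp (Cdiv (Copp (Cadd (RtoC (r * r)) (Cmul z z))) (RtoC s2L)))
         (besselI 0 (Cdiv (Cmul (RtoC (2 * r)) z) (RtoC s2L)))).

Definition Cpos (m : nat) (r : R) (z : CC) : CC :=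
  Cmul (RtoC r) (Cmul (b_coef m)
   (Cmul (Cexp (Copp (Cmul (a_coef m) (Cadd (RtoC (r * r)) (Cmul z z)))))
         (besselI m (Cmul (Cmul (RtoC 2) (b_coef m)) (Cmul z (RtoC r)))))).
Definition Cneg (m : nat) (r : R) (z : CC) : CC :=
  Cmul (RtoC r) (Cmul (Cconj (b_coef m))
   (Cmul (Cexp (Copp (Cmul (Cconj (a_coef m)) (Cadd (RtoC (r * r)) (Cmul z z)))))
         (besselI m (Cmul (Cmul (RtoC 2) (Cconj (b_coef m))) (Cmul z (RtoC r)))))).

Definition phase (k : R) (phi phi0 : R) (z : CC) : CC :=
  Cexp (Cmul (Cmul Cj (RtoC k))
    (Csub (RtoC (phi - phi0)) (Cmul (RtoC (gamma * LL)) (Cmul z z)))).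

Definition term_pos (r phi phi0 : R) (z : CC) (m : nat) : CC :=
  Cmul (Cpos m r z) (phase (INR m) phi phi0 z).
Definition term_neg (r phi phi0 : R) (z : CC) (m : nat) : CC :=
  Cmul (Cneg m r z) (phase (- INR m) phi phi0 z).

Definition psum_pos (r phi phi0 : R) (z : CC) (N : nat) : CC :=
  Csum (fun k => term_pos r phi phi0 z (S k)) N.
Definition psum_neg (r phi phi0 : R) (z : CC) (N : nat) : CC :=
  Csum (fun k => term_neg r phi phi0 z (S k)) N.

Definition pzd_psum (r phi phi0 r0 : R) (N : nat) : R :=
  Re (pRR0 r (RtoC r0)) / (2 * PI) + Re (psum_pos r phi phi0 (RtoC r0) N) / PI.

End Channel.

Definition unif_cv_disc (F : nat -> CC -> CC) (f : CC -> CC) (M : R) : Prop :=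
  forall eps, eps > 0 -> exists N0, forall N z, (N >= N0)%nat -> Cnorm z <= M ->
    Cnorm (Csub (F N z) (f z)) < eps.

Definition entire (f : CC -> CC) : Prop :=
  forall z0, exists l, forall eps, eps > 0 -> exists delta, delta > 0 /\
    forall h, 0 < Cnorm h < delta ->
      Cnorm (Csub (Cdiv (Csub (f (Cadd z0 h)) (f z0)) h) l) < eps.

(* Main.v *)
Require Import Defs.
From Stdlib Require Import Reals Lra Lia Psatz Field Ring ClassicalEpsilon Factorial.
Notation C1 := Defs.C1.
Notation C0 := Defs.C0.
Open Scope R_scope.

Lemma CC_eq z w : Re z = Re w -> Im z = Im w -> z = w.
Proof. destruct z, w; simpl; intros; subst; reflexivity. Qed.

Lemma CC_ring : ring_theory C0 C1 Cadd Cmul Csub Copp (@eq CC).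
Proof. constructor; intros; try reflexivity; apply CC_eq; simpl; ring. Qed.

Lemma CC_field : field_theory C0 C1 Cadd Cmul Csub Copp Cdiv Cinv (@eq CC).
Proof.
  constructor.
  - exact CC_ring.
  - intro H. assert (H1 := f_equal Re H). simpl in H1. lra.
  - reflexivity.
  - intros z Hz. apply CC_eq; simpl.
    + destruct z as [a b]; simpl.
      assert (a*a+b*b <> 0).
      { intro H0. apply Hz. assert (a = 0) by nra. assert (b = 0) by nra. subst. reflexivity. }
      field; auto.
    + destruct z as [a b]; simpl.
      assert (a*a+b*b <> 0).
      { intro H0. apply Hz. assert (a = 0) by nra. assert (b = 0) by nra. subst. reflexivity. }
      field; auto.
Qed.

Add Field CCfield : CC_field.

Example test_ring (a b c : CC) : Cmul (Cadd a b) c = Cadd (Cmul c a) (Cmul b c).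
Proof. ring. Qed.

Lemma sqrt_le_of_sq x y : 0 <= y -> x <= y*y -> sqrt x <= y.
Proof.
  intros Hy H. rewrite <- (sqrt_square y Hy). destruct (Rle_lt_dec 0 x).
  - apply sqrt_le_1; nra.
  - rewrite (sqrt_neg_0 x) by lra. apply sqrt_pos.
Qed.

Lemma Cnorm_ge0 z : 0 <= Cnorm z.
Proof. apply sqrt_pos. Qed.

Lemma Cnorm_sq z : Cnorm z * Cnorm z = Re z * Re z + Im z * Im z.
Proof. unfold Cnorm. apply sqrt_sqrt. nra. Qed.

Lemma Cnorm_eq_sq z x : 0 <= x -> x * x = Re z * Re z + Im z * Im z -> Cnorm z = x.
Proof. intros Hx H. unfold Cnorm. rewrite <- H. apply sqrt_square; auto. Qed.

Lemma Cnorm_le_sq z x : 0 <= x -> Re z * Re z + Im z * Im z <= x * x -> Cnorm z <= x.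
Proof. intros. apply sqrt_le_of_sq; auto. Qed.

Lemma Cnorm_mul z w : Cnorm (Cmul z w) = Cnorm z * Cnorm w.
Proof.
  apply Cnorm_eq_sq. apply Rmult_le_pos; apply Cnorm_ge0.
  replace (Cnorm z * Cnorm w * (Cnorm z * Cnorm w)) with
     ((Cnorm z * Cnorm z) * (Cnorm w * Cnorm w)) by ring.
  rewrite !Cnorm_sq. simpl. ring.
Qed.

Lemma Cnorm_add z w : Cnorm (Cadd z w) <= Cnorm z + Cnorm w.
Proof.
  apply Cnorm_le_sq. pose proof (Cnorm_ge0 z); pose proof (Cnorm_ge0 w); lra.
  pose proof (Cnorm_sq z) as H; pose proof (Cnorm_sq w) as H0.
  pose proof (Cnorm_ge0 z); pose proof (Cnorm_ge0 w).
  set (nz := Cnorm z) in *. set (nw := Cnorm w) in *. clearbody nz nw.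
  destruct z as [a b]; destruct w as [c d]; simpl in *.
  assert ((a*c+b*d) <= nz * nw).
  { destruct (Rle_lt_dec (a*c+b*d) 0). nra.
    apply Rsqr_incr_0_var. unfold Rsqr.
    replace (nz*nw*(nz*nw)) with ((nz*nz)*(nw*nw)) by ring.
    rewrite H, H0. pose proof (Rle_0_sqr (a*d-b*c)); unfold Rsqr in *; nra. nra. }
  nra.
Qed.

Lemma Cnorm_opp z : Cnorm (Copp z) = Cnorm z.
Proof. unfold Cnorm; simpl. f_equal; ring. Qed.

Lemma Cnorm_conj z : Cnorm (Cconj z) = Cnorm z.
Proof. unfold Cnorm; simpl. f_equal; ring. Qed.

Lemma Cnorm_sub z w : Cnorm (Csub z w) <= Cnorm z + Cnorm w.
Proof. unfold Csub. rewrite <- (Cnorm_opp w). apply Cnorm_add. Qed.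

Lemma Cnorm_sub_sym z w : Cnorm (Csub z w) = Cnorm (Csub w z).
Proof. unfold Cnorm; simpl. f_equal; ring. Qed.

Lemma Cnorm_RtoC x : Cnorm (RtoC x) = Rabs x.
Proof. unfold Cnorm; simpl. rewrite <- sqrt_Rsqr_abs. unfold Rsqr. f_equal; ring. Qed.

Lemma Re_le z : Rabs (Re z) <= Cnorm z.
Proof.
  rewrite <- sqrt_Rsqr_abs. apply sqrt_le_1_alt. unfold Rsqr. nra.
Qed.

Lemma Im_le z : Rabs (Im z) <= Cnorm z.
Proof.
  rewrite <- sqrt_Rsqr_abs. apply sqrt_le_1_alt. unfold Rsqr. nra.
Qed.

Lemma Cnorm_C0 : Cnorm C0 = 0.
Proof. unfold C0. rewrite Cnorm_RtoC. apply Rabs_R0. Qed.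

Lemma Cnorm_C1 : Cnorm C1 = 1.
Proof. unfold C1. rewrite Cnorm_RtoC. apply Rabs_R1. Qed.

Lemma Cnorm_zero z : Cnorm z = 0 -> z = C0.
Proof.
  intro H. pose proof (Cnorm_sq z). rewrite H in H0.
  destruct z as [a b]; simpl in *. apply CC_eq; simpl; nra.
Qed.

Lemma Cnorm_pos z : z <> C0 -> 0 < Cnorm z.
Proof. intro H. destruct (Cnorm_ge0 z); auto. exfalso; apply H, Cnorm_zero; auto. Qed.

Lemma Cnorm_inv z : Cnorm (Cinv z) = / Cnorm z.
Proof.
  destruct (Req_dec (Cnorm z) 0) as [H|H].
  - apply Cnorm_zero in H. subst.
    replace (Cinv C0) with C0 by (apply CC_eq; simpl; unfold Rdiv; ring).
    rewrite Cnorm_C0, Rinv_0. reflexivity.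
  - assert (z <> C0) by (intro; subst; apply H, Cnorm_C0).
    assert (Cmul (Cinv z) z = C1) by (field; auto).
    assert (Cnorm (Cinv z) * Cnorm z = 1) by (rewrite <- Cnorm_mul, H1; apply Cnorm_C1).
    apply Rmult_eq_reg_r with (Cnorm z); auto. rewrite H2, Rinv_l; auto.
Qed.

Lemma Cnorm_div z w : Cnorm (Cdiv z w) = Cnorm z / Cnorm w.
Proof. unfold Cdiv. rewrite Cnorm_mul, Cnorm_inv. reflexivity. Qed.

Lemma Cnorm_pow z n : Cnorm (Cpow z n) = Cnorm z ^ n.
Proof. induction n; simpl. apply Cnorm_C1. rewrite Cnorm_mul, IHn. reflexivity. Qed.

Lemma Cnorm_Cj : Cnorm Cj = 1.
Proof. unfold Cnorm; simpl. replace (0*0+1*1) with 1 by ring. apply sqrt_1. Qed.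

Lemma Cnorm_exp z : Cnorm (Cexp z) = exp (Re z).
Proof.
  apply Cnorm_eq_sq. left; apply exp_pos. simpl.
  replace (exp (Re z) * cos (Im z) * (exp (Re z) * cos (Im z)) +
   exp (Re z) * sin (Im z) * (exp (Re z) * sin (Im z))) with
   (exp (Re z) * exp (Re z) * (Rsqr (sin (Im z)) + Rsqr (cos (Im z)))) by (unfold Rsqr; ring).
  rewrite sin2_cos2. ring.
Qed.

Lemma Cnorm_exp_le z : Cnorm (Cexp z) <= exp (Cnorm z).
Proof.
  rewrite Cnorm_exp. destruct (Rle_lt_dec (Re z) (Cnorm z)).
  destruct r. left; apply exp_increasing; auto. rewrite H; lra.
  pose proof (Re_le z). pose proof (Rle_abs (Re z)). lra.
Qed.

Lemma Cexp_add z w : Cexp (Cadd z w) = Cmul (Cexp z) (Cexp w).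
Proof.
  apply CC_eq; simpl; rewrite exp_plus; [rewrite cos_plus | rewrite sin_plus]; ring.
Qed.

Lemma Cexp_conj z : Cexp (Cconj z) = Cconj (Cexp z).
Proof. apply CC_eq; simpl. rewrite cos_neg; ring. rewrite sin_neg; ring. Qed.

Lemma Cconj_mul z w : Cconj (Cmul z w) = Cmul (Cconj z) (Cconj w).
Proof. apply CC_eq; simpl; ring. Qed.
Lemma Cconj_add z w : Cconj (Cadd z w) = Cadd (Cconj z) (Cconj w).
Proof. apply CC_eq; simpl; ring. Qed.
Lemma Cconj_opp z : Cconj (Copp z) = Copp (Cconj z).
Proof. apply CC_eq; simpl; ring. Qed.
Lemma Cconj_sub z w : Cconj (Csub z w) = Csub (Cconj z) (Cconj w).
Proof. apply CC_eq; simpl; ring. Qed.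
Lemma Cconj_RtoC x : Cconj (RtoC x) = RtoC x.
Proof. apply CC_eq; simpl; ring. Qed.
Lemma Cconj_inv z : Cconj (Cinv z) = Cinv (Cconj z).
Proof. destruct z as [a b]; apply CC_eq; simpl; replace (a*a + - b * - b) with (a*a+b*b) by ring; unfold Rdiv; ring. Qed.
Lemma Cconj_div z w : Cconj (Cdiv z w) = Cdiv (Cconj z) (Cconj w).
Proof. unfold Cdiv. rewrite Cconj_mul, Cconj_inv. reflexivity. Qed.
Lemma Cconj_pow z n : Cconj (Cpow z n) = Cpow (Cconj z) n.
Proof. induction n; simpl. apply Cconj_RtoC. rewrite Cconj_mul, IHn; reflexivity. Qed.
Lemma Cconj_Csum f n : Cconj (Csum f n) = Csum (fun k => Cconj (f k)) n.
Proof. induction n; simpl. apply Cconj_RtoC. rewrite Cconj_add, IHn; reflexivity. Qed.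
Lemma Cconj_conj z : Cconj (Cconj z) = z.
Proof. apply CC_eq; simpl; ring. Qed.

Fixpoint Rsum (f : nat -> R) (n : nat) : R :=
  match n with O => 0 | S n' => Rsum f n' + f n' end.

Definition summable (A : nat -> R) := exists l, Un_cv (fun n => Rsum A n) l.

Lemma Cnorm_le_ReIm z : Cnorm z <= Rabs (Re z) + Rabs (Im z).
Proof.
  apply Cnorm_le_sq. pose proof (Rabs_pos (Re z)); pose proof (Rabs_pos (Im z)); lra.
  pose proof (Rabs_pos (Re z)); pose proof (Rabs_pos (Im z)).
  assert (Rabs (Re z) * Rabs (Re z) = Re z * Re z) by (rewrite <- Rabs_mult; apply Rabs_right; nra).
  assert (Rabs (Im z) * Rabs (Im z) = Im z * Im z) by (rewrite <- Rabs_mult; apply Rabs_right; nra).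
  nra.
Qed.

Lemma Cnorm_Csum_le f n : Cnorm (Csum f n) <= Rsum (fun k => Cnorm (f k)) n.
Proof.
  induction n; simpl. rewrite Cnorm_C0; lra.
  eapply Rle_trans. apply Cnorm_add. lra.
Qed.

Lemma Rsum_nonneg A n : (forall k, 0 <= A k) -> 0 <= Rsum A n.
Proof. intro H; induction n; simpl. lra. pose proof (H n); lra. Qed.

Lemma Rsum_mono A n m : (forall k, 0 <= A k) -> (n <= m)%nat -> Rsum A n <= Rsum A m.
Proof.
  intros H Hnm. induction Hnm. lra. simpl. pose proof (H m); lra.
Qed.

Lemma Rsum_le A B n : (forall k, A k <= B k) -> Rsum A n <= Rsum B n.
Proof. intro H; induction n; simpl. lra. pose proof (H n); lra. Qed.

Lemma Rsum_ext A B n : (forall k, A k = B k) -> Rsum A n = Rsum B n.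
Proof. intro H; induction n; simpl; auto. rewrite IHn, H; auto. Qed.

Lemma Csum_ext f g n : (forall k, f k = g k) -> Csum f n = Csum g n.
Proof. intro H; induction n; simpl; auto. rewrite IHn, H; auto. Qed.

Lemma Csum_diff_le f A n m : (forall k, Cnorm (f k) <= A k) -> (n <= m)%nat ->
  Cnorm (Csub (Csum f m) (Csum f n)) <= Rsum A m - Rsum A n.
Proof.
  intros H Hnm. induction Hnm.
  - replace (Csub (Csum f n) (Csum f n)) with C0 by ring. rewrite Cnorm_C0; lra.
  - simpl. replace (Csub (Cadd (Csum f m) (f m)) (Csum f n)) with
      (Cadd (Csub (Csum f m) (Csum f n)) (f m)) by ring.
    eapply Rle_trans. apply Cnorm_add. pose proof (H m). lra.
Qed.

Lemma Rsum_le_lim A l n : (forall k, 0 <= A k) -> Un_cv (fun n => Rsum A n) l -> Rsum A n <= l.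
Proof.
  intros H Hl. apply (growing_ineq (fun n => Rsum A n)); auto.
  intro k. simpl. pose proof (H k); lra.
Qed.

Definition Clim (u : nat -> CC) : CC := epsilon (inhabits C0) (fun l => C_cv u l).

Lemma Clim_spec u : (exists l, C_cv u l) -> C_cv u (Clim u).
Proof. intro H. unfold Clim. apply epsilon_spec. exact H. Qed.

Lemma C_cv_unique u l1 l2 : C_cv u l1 -> C_cv u l2 -> l1 = l2.
Proof.
  intros H1 H2. cut (Csub l1 l2 = C0).
  { intro H. replace l1 with (Cadd (Csub l1 l2) l2) by ring. rewrite H. ring. }
  apply Cnorm_zero.
  destruct (Cnorm_ge0 (Csub l1 l2)) as [Hp|]; auto. exfalso.
  set (e := Cnorm (Csub l1 l2)) in *.
  destruct (H1 (e/2)) as [N1 HN1]. lra. destruct (H2 (e/2)) as [N2 HN2]. lra.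
  specialize (HN1 (max N1 N2)%nat ltac:(lia)). specialize (HN2 (max N1 N2)%nat ltac:(lia)).
  rewrite Cnorm_sub_sym in HN1.
  pose proof (Cnorm_add (Csub l1 (u (max N1 N2))) (Csub (u (max N1 N2)) l2)).
  replace (Cadd (Csub l1 (u (max N1 N2))) (Csub (u (max N1 N2)) l2)) with (Csub l1 l2) in H by ring.
  fold e in H. lra.
Qed.

Lemma Clim_eq u l : C_cv u l -> Clim u = l.
Proof. intro H. apply (C_cv_unique u); auto. apply Clim_spec. eauto. Qed.

Lemma C_cv_bound u l x B N : C_cv u l -> (forall n, (n >= N)%nat -> Cnorm (Csub (u n) x) <= B) ->
  Cnorm (Csub l x) <= B.
Proof.
  intros Hl Hb. apply Rnot_lt_le. intro Hc.
  set (e := Cnorm (Csub l x) - B).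
  destruct (Hl e) as [N1 HN1]. unfold e; lra.
  specialize (HN1 (max N N1) ltac:(lia)). specialize (Hb (max N N1) ltac:(lia)).
  pose proof (Cnorm_add (Csub l (u (max N N1))) (Csub (u (max N N1)) x)).
  replace (Cadd (Csub l (u (max N N1))) (Csub (u (max N N1)) x)) with (Csub l x) in H by ring.
  rewrite Cnorm_sub_sym in HN1. unfold e in HN1. lra.
Qed.

Lemma Un_cv_bound u l x B N : Un_cv u l -> (forall n, (n >= N)%nat -> Rabs (u n - x) <= B) ->
  Rabs (l - x) <= B.
Proof.
  intros Hl Hb. apply Rnot_lt_le. intro Hc.
  set (e := Rabs (l - x) - B).
  destruct (Hl e) as [N1 HN1]. unfold e; lra.
  specialize (HN1 (max N N1) ltac:(lia)). specialize (Hb (max N N1) ltac:(lia)).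
  unfold R_dist in HN1. unfold e in HN1.
  pose proof (Rabs_triang (l - u (max N N1)) (u (max N N1) - x)).
  replace (l - u (max N N1) + (u (max N N1) - x)) with (l - x) in H by ring.
  rewrite Rabs_minus_sym in HN1. lra.
Qed.

Lemma C_cauchy_cv u : (forall eps, eps > 0 -> exists N, forall n m, (n >= N)%nat -> (m >= N)%nat ->
   Cnorm (Csub (u n) (u m)) < eps) -> exists l, C_cv u l.
Proof.
  intro H.
  assert (HR : Cauchy_crit (fun n => Re (u n))).
  { intros eps He. destruct (H eps He) as [N HN]. exists N. intros n m Hn Hm.
    unfold R_dist. eapply Rle_lt_trans. 2: apply (HN n m Hn Hm).
    apply (Re_le (Csub (u n) (u m))). }
  assert (HI : Cauchy_crit (fun n => Im (u n))).
  { intros eps He. destruct (H eps He) as [N HN]. exists N. intros n m Hn Hm.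
    unfold R_dist. eapply Rle_lt_trans. 2: apply (HN n m Hn Hm).
    apply (Im_le (Csub (u n) (u m))). }
  destruct (R_complete _ HR) as [a Ha]. destruct (R_complete _ HI) as [b Hb].
  exists (mkC a b). intros eps He.
  destruct (Ha (eps/2)) as [N1 HN1]. lra. destruct (Hb (eps/2)) as [N2 HN2]. lra.
  exists (max N1 N2). intros n Hn.
  eapply Rle_lt_trans. apply Cnorm_le_ReIm. simpl.
  specialize (HN1 n ltac:(lia)). specialize (HN2 n ltac:(lia)). unfold R_dist in *.
  unfold Rminus in HN1, HN2. lra.
Qed.

Lemma summable_cauchy A : summable A -> forall eps, eps > 0 -> exists N, forall n, (n >= N)%nat ->
  forall l, Un_cv (fun n => Rsum A n) l -> l - Rsum A n < eps.
Proof.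
  intros [l Hl] eps He. destruct (Hl eps He) as [N HN]. exists N. intros n Hn l' Hl'.
  rewrite (UL_sequence _ _ _ Hl' Hl). specialize (HN n Hn). unfold R_dist in HN.
  pose proof (Rle_abs (Rsum A n - l)). rewrite Rabs_minus_sym in HN.
  pose proof (Rle_abs (l - Rsum A n)). lra.
Qed.

Definition Sfun (f : nat -> CC -> CC) (z : CC) : CC := Clim (fun n => Csum (fun k => f k z) n).

Lemma Mtest (f : nat -> CC -> CC) (A : nat -> R) (D : CC -> Prop) :
  (forall k, 0 <= A k) -> summable A -> (forall k z, D z -> Cnorm (f k z) <= A k) ->
  (forall z, D z -> C_cv (fun n => Csum (fun k => f k z) n) (Sfun f z)) /\
  (forall eps, eps > 0 -> exists N, forall n z, (n >= N)%nat -> D z ->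
     Cnorm (Csub (Csum (fun k => f k z) n) (Sfun f z)) < eps).
Proof.
  intros HA0 HA Hf.
  destruct HA as [lA HlA].
  assert (Hc : forall z, D z -> C_cv (fun n => Csum (fun k => f k z) n) (Sfun f z)).
  { intros z Hz. apply Clim_spec. apply C_cauchy_cv. intros eps He.
    destruct (HlA (eps/2)) as [N HN]. lra. exists N. intros n m Hn Hm.
    assert (forall p q, (p >= N)%nat -> (q >= N)%nat -> (p <= q)%nat ->
       Cnorm (Csub (Csum (fun k => f k z) q) (Csum (fun k => f k z) p)) < eps).
    { intros p q Hp Hq Hpq. eapply Rle_lt_trans. apply (Csum_diff_le _ A). intro k; apply Hf; auto. auto.
      pose proof (HN p Hp); pose proof (HN q Hq). unfold R_dist in *. cbv beta in *.
      pose proof (Rle_abs (Rsum A q - lA)); pose proof (Rle_abs (lA - Rsum A p)).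
      rewrite Rabs_minus_sym in H. lra. }
    destruct (Nat.le_ge_cases n m).
    - rewrite Cnorm_sub_sym. apply H; auto.
    - apply H; auto. }
  split; auto.
  intros eps He. destruct (summable_cauchy A (ex_intro _ lA HlA) (eps/2)) as [N HN]. lra.
  exists N. intros n z Hn Hz.
  assert (Cnorm (Csub (Sfun f z) (Csum (fun k => f k z) n)) <= lA - Rsum A n).
  { apply (C_cv_bound _ _ _ _ n (Hc z Hz)). intros m Hm.
    eapply Rle_trans. apply (Csum_diff_le _ A). intro k; apply Hf; auto. auto.
    pose proof (Rsum_le_lim A lA m HA0 HlA). cbv beta in *. lra. }
  rewrite Cnorm_sub_sym. specialize (HN n Hn lA HlA). lra.
Qed.

Definition hasd (f : CC -> CC) (z l : CC) : Prop :=
  forall eps, eps > 0 -> exists delta, delta > 0 /\ forall h, Cnorm h < delta ->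
    Cnorm (Csub (Csub (f (Cadd z h)) (f z)) (Cmul l h)) <= eps * Cnorm h.

Lemma Rmul_le a b c d : 0 <= a <= b -> 0 <= c <= d -> a * c <= b * d.
Proof. intros. apply Rmult_le_compat; lra. Qed.

Lemma hasd_ext f g z l : (forall w, f w = g w) -> hasd f z l -> hasd g z l.
Proof. intros E H eps He. destruct (H eps He) as [d [Hd Hh]]. exists d; split; auto.
  intros h Hh'. rewrite <- !E. auto. Qed.

Lemma hasd_cont f z l : hasd f z l -> exists delta, delta > 0 /\ forall h, Cnorm h < delta ->
  Cnorm (Csub (f (Cadd z h)) (f z)) <= (Cnorm l + 1) * Cnorm h.
Proof.
  intro H. destruct (H 1 ltac:(lra)) as [d [Hd Hh]]. exists d; split; auto.
  intros h Hh'. specialize (Hh h Hh').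
  replace (Csub (f (Cadd z h)) (f z)) with
    (Cadd (Csub (Csub (f (Cadd z h)) (f z)) (Cmul l h)) (Cmul l h)) by ring.
  eapply Rle_trans. apply Cnorm_add. rewrite Cnorm_mul. lra.
Qed.

Lemma hasd_const c z : hasd (fun _ => c) z C0.
Proof. intros eps He. exists 1; split. lra. intros h _.
  replace (Csub (Csub c c) (Cmul C0 h)) with C0 by ring. rewrite Cnorm_C0.
  pose proof (Cnorm_ge0 h). nra. Qed.

Lemma hasd_id z : hasd (fun w => w) z C1.
Proof. intros eps He. exists 1; split. lra. intros h _.
  replace (Csub (Csub (Cadd z h) z) (Cmul C1 h)) with C0 by ring. rewrite Cnorm_C0.
  pose proof (Cnorm_ge0 h). nra. Qed.

Lemma hasd_add f g z l1 l2 : hasd f z l1 -> hasd g z l2 -> hasd (fun w => Cadd (f w) (g w)) z (Cadd l1 l2).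
Proof.
  intros H1 H2 eps He. destruct (H1 (eps/2) ltac:(lra)) as [d1 [Hd1 Hh1]].
  destruct (H2 (eps/2) ltac:(lra)) as [d2 [Hd2 Hh2]].
  exists (Rmin d1 d2); split. apply Rmin_pos; auto. intros h Hh.
  specialize (Hh1 h ltac:(pose proof (Rmin_l d1 d2); lra)).
  specialize (Hh2 h ltac:(pose proof (Rmin_r d1 d2); lra)).
  replace (Csub (Csub (Cadd (f (Cadd z h)) (g (Cadd z h))) (Cadd (f z) (g z))) (Cmul (Cadd l1 l2) h))
    with (Cadd (Csub (Csub (f (Cadd z h)) (f z)) (Cmul l1 h)) (Csub (Csub (g (Cadd z h)) (g z)) (Cmul l2 h))) by ring.
  eapply Rle_trans. apply Cnorm_add. lra.
Qed.

Lemma hasd_scal c f z l : hasd f z l -> hasd (fun w => Cmul c (f w)) z (Cmul c l).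
Proof.
  intros H eps He. destruct (H (eps / (Cnorm c + 1))) as [d [Hd Hh]].
  { apply Rdiv_lt_0_compat; auto. pose proof (Cnorm_ge0 c); lra. }
  exists d; split; auto. intros h Hh'. specialize (Hh h Hh').
  replace (Csub (Csub (Cmul c (f (Cadd z h))) (Cmul c (f z))) (Cmul (Cmul c l) h))
    with (Cmul c (Csub (Csub (f (Cadd z h)) (f z)) (Cmul l h))) by ring.
  rewrite Cnorm_mul. pose proof (Cnorm_ge0 c). pose proof (Cnorm_ge0 h).
  pose proof (Cnorm_ge0 (Csub (Csub (f (Cadd z h)) (f z)) (Cmul l h))).
  eapply Rle_trans. apply Rmult_le_compat_l. lra. apply Hh.
  replace (Cnorm c * (eps / (Cnorm c + 1) * Cnorm h)) with (eps * Cnorm h * (Cnorm c / (Cnorm c + 1))) by (field; lra).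
  rewrite <- (Rmult_1_r (eps * Cnorm h)) at 2. apply Rmult_le_compat_l. nra.
  apply Rmult_le_reg_r with (Cnorm c + 1). lra. field_simplify; lra.
Qed.

Lemma hasd_mul f g z l1 l2 : hasd f z l1 -> hasd g z l2 ->
  hasd (fun w => Cmul (f w) (g w)) z (Cadd (Cmul l1 (g z)) (Cmul (f z) l2)).
Proof.
  intros H1 H2 eps He.
  destruct (hasd_cont g z l2 H2) as [d0 [Hd0 Hc]].
  set (Gb := Cnorm (g z) + Cnorm l2 + 1).
  assert (HGb : 0 < Gb) by (unfold Gb; pose proof (Cnorm_ge0 (g z)); pose proof (Cnorm_ge0 l2); lra).
  set (Fb := Cnorm (f z) + 1).
  assert (HFb : 0 < Fb) by (unfold Fb; pose proof (Cnorm_ge0 (f z)); lra).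
  set (Lb := Cnorm l1 * (Cnorm l2 + 1) + 1).
  assert (HLb : 0 < Lb) by (unfold Lb; pose proof (Cnorm_ge0 l1); pose proof (Cnorm_ge0 l2); nra).
  destruct (H1 (eps/(3*Gb))) as [d1 [Hd1 Hh1]]. apply Rdiv_lt_0_compat; lra.
  destruct (H2 (eps/(3*Fb))) as [d2 [Hd2 Hh2]]. apply Rdiv_lt_0_compat; lra.
  exists (Rmin (Rmin d0 1) (Rmin (Rmin d1 d2) (eps/(3*Lb)))). split.
  { repeat apply Rmin_pos; auto; try lra. apply Rdiv_lt_0_compat; lra. }
  intros h Hh.
  pose proof (Rmin_l (Rmin d0 1) (Rmin (Rmin d1 d2) (eps/(3*Lb)))).
  pose proof (Rmin_r (Rmin d0 1) (Rmin (Rmin d1 d2) (eps/(3*Lb)))).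
  pose proof (Rmin_l d0 1). pose proof (Rmin_r d0 1).
  pose proof (Rmin_l (Rmin d1 d2) (eps/(3*Lb))). pose proof (Rmin_r (Rmin d1 d2) (eps/(3*Lb))).
  pose proof (Rmin_l d1 d2). pose proof (Rmin_r d1 d2).
  specialize (Hh1 h ltac:(lra)). specialize (Hh2 h ltac:(lra)). specialize (Hc h ltac:(lra)).
  set (A1 := Csub (Csub (f (Cadd z h)) (f z)) (Cmul l1 h)) in *.
  set (A2 := Csub (Csub (g (Cadd z h)) (g z)) (Cmul l2 h)) in *.
  set (A3 := Csub (g (Cadd z h)) (g z)) in *.
  replace (Csub (Csub (Cmul (f (Cadd z h)) (g (Cadd z h))) (Cmul (f z) (g z)))
      (Cmul (Cadd (Cmul l1 (g z)) (Cmul (f z) l2)) h))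
    with (Cadd (Cadd (Cmul A1 (g (Cadd z h))) (Cmul (f z) A2)) (Cmul (Cmul l1 h) A3))
    by (unfold A1, A2, A3; ring).
  assert (Hg : Cnorm (g (Cadd z h)) <= Gb).
  { replace (g (Cadd z h)) with (Cadd (g z) A3) by (unfold A3; ring).
    eapply Rle_trans. apply Cnorm_add. unfold Gb.
    pose proof (Cnorm_ge0 l2). pose proof (Cnorm_ge0 h). nra. }
  pose proof (Cnorm_ge0 h). pose proof (Cnorm_ge0 A1). pose proof (Cnorm_ge0 A2).
  pose proof (Cnorm_ge0 A3). pose proof (Cnorm_ge0 (f z)). pose proof (Cnorm_ge0 l1).
  pose proof (Cnorm_ge0 l2). pose proof (Cnorm_ge0 (g (Cadd z h))).
  eapply Rle_trans. apply Cnorm_add. eapply Rle_trans. apply Rplus_le_compat_r. apply Cnorm_add.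
  rewrite !Cnorm_mul.
  assert (T1 : Cnorm A1 * Cnorm (g (Cadd z h)) <= eps/3 * Cnorm h).
  { eapply Rle_trans. apply Rmul_le. split. lra. apply Hh1. split. lra. apply Hg.
    replace (eps / (3 * Gb) * Cnorm h * Gb) with (eps/3 * Cnorm h) by (field; lra). lra. }
  assert (T2 : Cnorm (f z) * Cnorm A2 <= eps/3 * Cnorm h).
  { eapply Rle_trans. apply Rmul_le. split. lra. instantiate (1 := Fb). unfold Fb; lra.
    split. lra. apply Hh2.
    replace (Fb * (eps / (3 * Fb) * Cnorm h)) with (eps/3 * Cnorm h) by (field; lra). lra. }
  assert (T3 : Cnorm l1 * Cnorm h * Cnorm A3 <= eps/3 * Cnorm h).
  { assert (Cnorm h <= eps/(3*Lb)) by lra.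
    assert (Cnorm l1 * Cnorm A3 <= Lb * Cnorm h).
    { eapply Rle_trans. apply Rmul_le. split. lra. apply Rle_refl. split. lra. apply Hc.
      unfold Lb. nra. }
    assert (Lb * Cnorm h <= eps/3).
    { apply Rmult_le_reg_r with (/Lb). apply Rinv_0_lt_compat; lra.
      replace (Lb * Cnorm h * / Lb) with (Cnorm h) by (field; lra).
      replace (eps / 3 * / Lb) with (eps / (3 * Lb)) by (field; lra). lra. }
    replace (Cnorm l1 * Cnorm h * Cnorm A3) with (Cnorm h * (Cnorm l1 * Cnorm A3)) by ring.
    replace (eps/3 * Cnorm h) with (Cnorm h * (eps/3)) by ring.
    apply Rmult_le_compat_l. lra. lra. }
  lra.
Qed.

Lemma hasd_comp f g z l1 l2 : hasd g z l1 -> hasd f (g z) l2 ->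
  hasd (fun w => f (g w)) z (Cmul l2 l1).
Proof.
  intros H1 H2 eps He.
  destruct (hasd_cont g z l1 H1) as [d0 [Hd0 Hc]].
  set (K := Cnorm l1 + 1).
  assert (HK : 0 < K) by (unfold K; pose proof (Cnorm_ge0 l1); lra).
  set (K2 := Cnorm l2 + 1).
  assert (HK2 : 0 < K2) by (unfold K2; pose proof (Cnorm_ge0 l2); lra).
  destruct (H2 (eps/(2*K))) as [d2 [Hd2 Hh2]]. apply Rdiv_lt_0_compat; lra.
  destruct (H1 (eps/(2*K2))) as [d1 [Hd1 Hh1]]. apply Rdiv_lt_0_compat; lra.
  exists (Rmin d0 (Rmin d1 (d2/K))). split.
  { repeat apply Rmin_pos; auto. apply Rdiv_lt_0_compat; lra. }
  intros h Hh.
  pose proof (Rmin_l d0 (Rmin d1 (d2/K))). pose proof (Rmin_r d0 (Rmin d1 (d2/K))).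
  pose proof (Rmin_l d1 (d2/K)). pose proof (Rmin_r d1 (d2/K)).
  specialize (Hc h ltac:(lra)). specialize (Hh1 h ltac:(lra)).
  set (k := Csub (g (Cadd z h)) (g z)) in *.
  pose proof (Cnorm_ge0 h). pose proof (Cnorm_ge0 k).
  assert (Hk : Cnorm k < d2).
  { eapply Rle_lt_trans. apply Hc. fold K.
    apply Rmult_lt_reg_r with (/K). apply Rinv_0_lt_compat; lra.
    replace (K * Cnorm h * / K) with (Cnorm h) by (field; lra).
    replace (d2 * / K) with (d2 / K) by (field; lra). lra. }
  specialize (Hh2 k Hk).
  replace (f (g (Cadd z h))) with (f (Cadd (g z) k)) by (f_equal; unfold k; ring).
  replace (Csub (Csub (f (Cadd (g z) k)) (f (g z))) (Cmul (Cmul l2 l1) h)) with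
    (Cadd (Csub (Csub (f (Cadd (g z) k)) (f (g z))) (Cmul l2 k))
          (Cmul l2 (Csub (Csub (g (Cadd z h)) (g z)) (Cmul l1 h)))) by (unfold k; ring).
  eapply Rle_trans. apply Cnorm_add. rewrite Cnorm_mul.
  assert (eps / (2*K) * Cnorm k <= eps/2 * Cnorm h).
  { eapply Rle_trans. apply Rmult_le_compat_l. apply Rlt_le, Rdiv_lt_0_compat; lra. apply Hc.
    fold K. replace (eps / (2 * K) * (K * Cnorm h)) with (eps/2 * Cnorm h) by (field; lra). lra. }
  assert (Cnorm l2 * Cnorm (Csub (Csub (g (Cadd z h)) (g z)) (Cmul l1 h)) <= eps/2 * Cnorm h).
  { eapply Rle_trans. apply Rmul_le. split. apply Cnorm_ge0. instantiate (1 := K2). unfold K2; lra.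
    split. apply Cnorm_ge0. apply Hh1.
    replace (K2 * (eps / (2 * K2) * Cnorm h)) with (eps/2 * Cnorm h) by (field; lra). lra. }
  lra.
Qed.

Lemma hasd_mul_const f c z l : hasd f z l -> hasd (fun w => Cmul (f w) c) z (Cmul l c).
Proof.
  intro H. apply hasd_ext with (fun w => Cmul c (f w)). intro; ring.
  replace (Cmul l c) with (Cmul c l) by ring. apply hasd_scal; auto.
Qed.

Lemma hasd_Csum (f : nat -> CC -> CC) (f' : nat -> CC -> CC) z n :
  (forall k, hasd (f k) z (f' k z)) -> hasd (fun w => Csum (fun k => f k w) n) z (Csum (fun k => f' k z) n).
Proof.
  intro H. induction n; simpl.
  - apply hasd_const.
  - apply hasd_add; auto.
Qed.

Lemma hasd_opp f z l : hasd f z l -> hasd (fun w => Copp (f w)) z (Copp l).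
Proof.
  intro H. apply hasd_ext with (fun w => Cmul (RtoC (-1)) (f w)).
  intro; apply CC_eq; simpl; ring.
  replace (Copp l) with (Cmul (RtoC (-1)) l) by (apply CC_eq; simpl; ring).
  apply hasd_scal; auto.
Qed.

Lemma hasd_sub f g z l1 l2 : hasd f z l1 -> hasd g z l2 -> hasd (fun w => Csub (f w) (g w)) z (Csub l1 l2).
Proof. intros. unfold Csub. apply hasd_add; auto. apply hasd_opp; auto. Qed.

Lemma RtoC_add a b : RtoC (a + b) = Cadd (RtoC a) (RtoC b).
Proof. apply CC_eq; simpl; ring. Qed.
Lemma RtoC_mul a b : RtoC (a * b) = Cmul (RtoC a) (RtoC b).
Proof. apply CC_eq; simpl; ring. Qed.
Lemma RtoC_opp a : RtoC (- a) = Copp (RtoC a).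
Proof. apply CC_eq; simpl; ring. Qed.
Lemma RtoC_inv a : RtoC (/ a) = Cinv (RtoC a).
Proof. destruct (Req_dec a 0). subst. apply CC_eq; simpl; unfold Rdiv; rewrite ?Rmult_0_l, ?Rplus_0_r, ?Rinv_0; ring.
  apply CC_eq; simpl; field; auto. Qed.

Lemma hasd_eq_l f z l l' : l = l' -> hasd f z l -> hasd f z l'.
Proof. intros; subst; auto. Qed.

Lemma hasd_pow n z : hasd (fun w => Cpow w n) z (Cmul (RtoC (INR n)) (Cpow z (pred n))).
Proof.
  induction n.
  - simpl. eapply hasd_eq_l. 2: apply hasd_const. apply CC_eq; simpl; ring.
  - simpl Cpow. eapply hasd_eq_l. 2: apply hasd_mul; [apply hasd_id | apply IHn].
    rewrite S_INR, RtoC_add. destruct n.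
    + simpl. apply CC_eq; simpl; ring.
    + change (Init.Nat.pred (S n)) with n. change (Cpow z (S n)) with (Cmul z (Cpow z n)). change (RtoC 1) with C1. ring.
Qed.

Lemma lim0_bound f l : derivable_pt_lim f 0 l -> forall e, e > 0 -> exists d, d > 0 /\
  forall x, Rabs x < d -> Rabs (f x - f 0 - l * x) <= e * Rabs x.
Proof.
  intros H e He. destruct (H e He) as [d Hd]. exists d; split. apply (cond_pos d).
  intros x Hx. destruct (Req_dec x 0).
  - subst. rewrite Rabs_R0. replace (f 0 - f 0 - l * 0) with 0 by ring. rewrite Rabs_R0; lra.
  - specialize (Hd x H0 Hx). rewrite Rplus_0_l in Hd.
    replace (f x - f 0 - l * x) with (((f x - f 0) / x - l) * x) by (field; auto).
    rewrite Rabs_mult. apply Rmult_le_compat_r. apply Rabs_pos. lra.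
Qed.

Lemma Cexp_small : forall eps, eps > 0 -> exists d, d > 0 /\ forall h, Cnorm h < d ->
  Cnorm (Csub (Csub (Cexp h) C1) h) <= eps * Cnorm h.
Proof.
  intros eps He. set (e1 := eps / 8).
  assert (He1 : e1 > 0) by (unfold e1; lra).
  assert (He1' : e1 <= 1 \/ e1 > 1) by lra.
  destruct (lim0_bound exp 1 derivable_pt_lim_exp_0 (Rmin e1 1) ltac:(apply Rmin_pos; lra)) as [d1 [Hd1 H1]].
  destruct (lim0_bound sin 1 ltac:(rewrite <- cos_0; apply derivable_pt_lim_sin) (Rmin e1 1) ltac:(apply Rmin_pos; lra)) as [d2 [Hd2 H2]].
  destruct (lim0_bound cos 0 ltac:(replace 0 with (- sin 0) at 2 by (rewrite sin_0; ring); apply derivable_pt_lim_cos) (Rmin e1 1) ltac:(apply Rmin_pos; lra)) as [d3 [Hd3 H3]].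
  exists (Rmin (Rmin d1 d2) (Rmin d3 (Rmin 1 e1))). split.
  { repeat apply Rmin_pos; lra. }
  intros h Hh.
  pose proof (Rmin_l (Rmin d1 d2) (Rmin d3 (Rmin 1 e1))). pose proof (Rmin_r (Rmin d1 d2) (Rmin d3 (Rmin 1 e1))).
  pose proof (Rmin_l d1 d2). pose proof (Rmin_r d1 d2). pose proof (Rmin_l d3 (Rmin 1 e1)).
  pose proof (Rmin_r d3 (Rmin 1 e1)). pose proof (Rmin_l 1 e1). pose proof (Rmin_r 1 e1).
  pose proof (Rmin_l e1 1). pose proof (Rmin_r e1 1).
  destruct h as [x y].
  pose proof (Re_le (mkC x y)) as Hx. pose proof (Im_le (mkC x y)) as Hy. simpl in Hx, Hy.
  set (nh := Cnorm (mkC x y)) in *.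
  specialize (H1 x ltac:(lra)). specialize (H2 y ltac:(lra)). specialize (H3 y ltac:(lra)).
  rewrite exp_0 in H1. rewrite sin_0 in H2. rewrite cos_0 in H3.
  set (m := Rmin e1 1) in *. assert (Hm : 0 < m) by (unfold m; apply Rmin_pos; lra).
  eapply Rle_trans. apply Cnorm_le_ReIm. unfold Cexp; simpl.
  assert (HR : Rabs (exp x * cos y - 1 - x) <= 3 * e1 * nh).
  { replace (exp x * cos y - 1 - x) with ((exp x - 1 - 1 * x) * cos y + (1 + x) * (cos y - 1 - 0 * y)) by ring.
    eapply Rle_trans. apply Rabs_triang. rewrite !Rabs_mult.
    pose proof (COS_bound y). assert (Hc1 : Rabs (cos y) <= 1) by (apply Rabs_le; lra).
    assert (Rabs (1 + x) <= 2) by (eapply Rle_trans; [apply Rabs_triang | rewrite Rabs_R1; lra]).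
    pose proof (Rabs_pos (cos y)). pose proof (Rabs_pos (1+x)). pose proof (Rabs_pos x). pose proof (Rabs_pos y).
    pose proof (Rabs_pos (exp x - 1 - 1 * x)). pose proof (Rabs_pos (cos y - 1 - 0 * y)).
    assert (Rabs (exp x - 1 - 1 * x) * Rabs (cos y) <= e1 * nh).
    { eapply Rle_trans. apply Rmul_le. split. lra. apply H1. split. lra. apply Hc1.
      assert (m * Rabs x <= e1 * nh) by (apply Rmul_le; lra). rewrite Rmult_1_r. lra. }
    assert (Rabs (1 + x) * Rabs (cos y - 1 - 0 * y) <= 2 * (e1 * nh)).
    { apply Rmul_le. lra. split. lra. eapply Rle_trans. apply H3. apply Rmul_le; lra. }
    lra. }
  assert (HI : Rabs (exp x * sin y - 0 - y) <= 5 * e1 * nh).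
  { replace (exp x * sin y - 0 - y) with ((exp x - 1 - 1 * x) * sin y + x * sin y + (sin y - 0 - 1 * y)) by ring.
    eapply Rle_trans. apply Rabs_triang. eapply Rle_trans. apply Rplus_le_compat_r. apply Rabs_triang.
    rewrite !Rabs_mult.
    pose proof (Rabs_pos (sin y)). pose proof (Rabs_pos x). pose proof (Rabs_pos y).
    pose proof (Rabs_pos (exp x - 1 - 1 * x)). pose proof (Rabs_pos (sin y - 0 - 1 * y)).
    assert (Hs : Rabs (sin y) <= 2 * nh).
    { replace (sin y) with ((sin y - 0 - 1 * y) + y) by ring. eapply Rle_trans. apply Rabs_triang.
      assert (m * Rabs y <= 1 * nh) by (apply Rmul_le; lra). lra. }
    assert (Rabs (exp x - 1 - 1 * x) * Rabs (sin y) <= 2 * (e1 * nh)).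
    { eapply Rle_trans. apply Rmul_le. split. lra. apply H1. split. lra. apply Hs.
      assert (m * Rabs x <= e1 * 1) by (apply Rmul_le; lra).
      assert (0 <= nh) by (unfold nh; apply Cnorm_ge0). nra. }
    assert (Rabs x * Rabs (sin y) <= 2 * (e1 * nh)).
    { eapply Rle_trans. apply Rmul_le. split. lra. instantiate (1 := e1). lra. split. lra. apply Hs. lra. }
    assert (Rabs (sin y - 0 - 1 * y) <= e1 * nh).
    { eapply Rle_trans. apply H2. apply Rmul_le; lra. }
    lra. }
  unfold Rminus in *. unfold e1 in *. lra.
Qed.

Lemma hasd_exp z : hasd Cexp z (Cexp z).
Proof.
  intros eps He. destruct (Cexp_small (eps / (Cnorm (Cexp z) + 1))) as [d [Hd Hh]].
  { apply Rdiv_lt_0_compat; auto. pose proof (Cnorm_ge0 (Cexp z)); lra. }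
  exists d; split; auto. intros h Hh'. specialize (Hh h Hh').
  replace (Csub (Csub (Cexp (Cadd z h)) (Cexp z)) (Cmul (Cexp z) h)) with
    (Cmul (Cexp z) (Csub (Csub (Cexp h) C1) h)) by (rewrite Cexp_add; ring).
  rewrite Cnorm_mul. pose proof (Cnorm_ge0 (Cexp z)). pose proof (Cnorm_ge0 h).
  eapply Rle_trans. apply Rmult_le_compat_l. lra. apply Hh.
  replace (Cnorm (Cexp z) * (eps / (Cnorm (Cexp z) + 1) * Cnorm h)) with
    (eps * Cnorm h * (Cnorm (Cexp z) / (Cnorm (Cexp z) + 1))) by (field; lra).
  rewrite <- (Rmult_1_r (eps * Cnorm h)) at 2. apply Rmult_le_compat_l. nra.
  apply Rmult_le_reg_r with (Cnorm (Cexp z) + 1). lra. field_simplify; lra.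
Qed.

Lemma Re_sub a b : Re (Csub a b) = Re a - Re b.
Proof. simpl; ring. Qed.
Lemma Re_RtoC_mul s a : Re (Cmul (RtoC s) a) = s * Re a.
Proof. simpl; ring. Qed.

Lemma mvt_bound G D z h B : (forall w, hasd G w (D w)) ->
  (forall t, 0 <= t <= 1 -> Cnorm (D (Cadd z (Cmul (RtoC t) h))) <= B) ->
  Cnorm (Csub (G (Cadd z h)) (G z)) <= B * Cnorm h.
Proof.
  intros HG HB.
  set (v := Csub (G (Cadd z h)) (G z)). set (u := Cconj v).
  set (phi := fun t => Re (Cmul u (G (Cadd z (Cmul (RtoC t) h))))).
  set (phi' := fun t => Re (Cmul u (Cmul (D (Cadd z (Cmul (RtoC t) h))) h))).
  assert (Hd : forall t, derivable_pt_lim phi t (phi' t)).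
  { intros t eps He.
    set (w := Cadd z (Cmul (RtoC t) h)).
    set (K := Cnorm u * Cnorm h + 1).
    assert (HK : 0 < K) by (unfold K; pose proof (Cnorm_ge0 u); pose proof (Cnorm_ge0 h); nra).
    destruct (HG w (eps / (2*K))) as [d [Hd Hh]]. apply Rdiv_lt_0_compat; lra.
    assert (Hdp : 0 < d / (Cnorm h + 1)) by (apply Rdiv_lt_0_compat; pose proof (Cnorm_ge0 h); lra).
    exists (mkposreal _ Hdp). simpl. intros s Hs0 Hs.
    set (k := Cmul (RtoC s) h).
    assert (Hk : Cnorm k = Rabs s * Cnorm h) by (unfold k; rewrite Cnorm_mul, Cnorm_RtoC; auto).
    assert (Hkd : Cnorm k < d).
    { rewrite Hk. pose proof (Cnorm_ge0 h). pose proof (Rabs_pos s).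
      apply Rmult_lt_compat_r with (r := Cnorm h + 1) in Hs; [|lra].
      replace (d / (Cnorm h + 1) * (Cnorm h + 1)) with d in Hs by (field; lra). nra. }
    specialize (Hh k Hkd).
    set (E := Csub (Csub (G (Cadd w k)) (G w)) (Cmul (D w) k)) in *.
    assert (Hid : Re (Cmul u E) = phi (t + s) - phi t - s * phi' t).
    { unfold phi, phi'. fold w. rewrite <- Re_RtoC_mul, <- !Re_sub. f_equal.
      replace (Cadd z (Cmul (RtoC (t + s)) h)) with (Cadd w k) by (unfold w, k; rewrite RtoC_add; ring).
      unfold E, k. ring. }
    replace ((phi (t + s) - phi t) / s - phi' t) with ((phi (t + s) - phi t - s * phi' t) / s) by (field; auto).
    rewrite <- Hid. unfold Rdiv. rewrite Rabs_mult, Rabs_inv.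
    pose proof (Re_le (Cmul u E)). rewrite Cnorm_mul in H.
    pose proof (Rabs_pos s). assert (0 < Rabs s) by (apply Rabs_pos_lt; auto).
    pose proof (Cnorm_ge0 u). pose proof (Cnorm_ge0 E). pose proof (Cnorm_ge0 h).
    apply Rmult_lt_reg_r with (Rabs s). auto.
    rewrite Rmult_assoc, Rinv_l, Rmult_1_r by lra.
    eapply Rle_lt_trans. apply H.
    eapply Rle_lt_trans. apply Rmult_le_compat_l. auto. apply Hh. rewrite Hk.
    replace (Cnorm u * (eps / (2 * K) * (Rabs s * Cnorm h))) with
      ((eps * Rabs s) * ((Cnorm u * Cnorm h) / (2 * K))) by (field; lra).
    rewrite <- (Rmult_1_r (eps * Rabs s)) at 2. apply Rmult_lt_compat_l. nra.
    apply Rmult_lt_reg_r with (2*K). lra. unfold Rdiv; rewrite Rmult_assoc, Rinv_l, Rmult_1_r by lra; unfold K; nra. }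
  destruct (MVT_cor2 phi phi' 0 1 ltac:(lra) (fun c _ => Hd c)) as [c [Hc Hc01]].
  assert (H1 : phi 1 - phi 0 = Cnorm v * Cnorm v).
  { unfold phi. rewrite <- Re_sub.
    replace (Cadd z (Cmul (RtoC 1) h)) with (Cadd z h) by (change (RtoC 1) with C1; ring).
    replace (Cadd z (Cmul (RtoC 0) h)) with z by (change (RtoC 0) with C0; ring).
    rewrite Cnorm_sq. replace (Csub (Cmul u (G (Cadd z h))) (Cmul u (G z))) with (Cmul u v) by (unfold v; ring).
    unfold u. simpl. ring. }
  assert (H2 : phi' c <= Cnorm v * (B * Cnorm h)).
  { unfold phi'. eapply Rle_trans. apply Rle_abs. eapply Rle_trans. apply Re_le.
    rewrite !Cnorm_mul. unfold u. rewrite Cnorm_conj.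
    pose proof (Cnorm_ge0 v). pose proof (Cnorm_ge0 h).
    pose proof (HB c ltac:(lra)). pose proof (Cnorm_ge0 (D (Cadd z (Cmul (RtoC c) h)))).
    apply Rmult_le_compat_l. auto. apply Rmult_le_compat_r; auto. }
  assert (HB0 : 0 <= B).
  { eapply Rle_trans. apply Cnorm_ge0. apply (HB 0). lra. }
  pose proof (Cnorm_ge0 v). pose proof (Cnorm_ge0 h).
  fold v. rewrite Rminus_0_r, Rmult_1_r in Hc. rewrite Hc in H1.
  destruct (Rle_lt_dec (Cnorm v) (B * Cnorm h)); auto.
  assert (0 <= B * Cnorm h) by nra. nra.
Qed.

Lemma unif_pointwise F f M w : unif_cv_disc F f M -> Cnorm w <= M -> C_cv (fun n => F n w) (f w).
Proof. intros H Hw eps He. destruct (H eps He) as [N HN]. exists N. intros n Hn. apply HN; auto. Qed.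

Lemma C_cv_sub u v a b : C_cv u a -> C_cv v b -> C_cv (fun n => Csub (u n) (v n)) (Csub a b).
Proof.
  intros Hu Hv eps He. destruct (Hu (eps/2) ltac:(lra)) as [N1 H1]. destruct (Hv (eps/2) ltac:(lra)) as [N2 H2].
  exists (max N1 N2). intros n Hn. specialize (H1 n ltac:(lia)). specialize (H2 n ltac:(lia)).
  replace (Csub (Csub (u n) (v n)) (Csub a b)) with (Csub (Csub (u n) a) (Csub (v n) b)) by ring.
  eapply Rle_lt_trans. apply Cnorm_sub. lra.
Qed.

Lemma ULD (F D : nat -> CC -> CC) f g :
  (forall N w, hasd (F N) w (D N w)) -> (forall M, unif_cv_disc F f M) ->
  (forall M, unif_cv_disc D g M) -> forall z, hasd f z (g z).
Proof.
  intros HF Hf Hg z eps He.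
  set (M := Cnorm z + 1).
  destruct (Hg M (eps/8) ltac:(lra)) as [N0 HN0].
  destruct (HF N0 z (eps/4) ltac:(lra)) as [d [Hd Hh]].
  exists (Rmin d 1). split. apply Rmin_pos; lra.
  intros h Hhd. pose proof (Rmin_l d 1). pose proof (Rmin_r d 1).
  specialize (Hh h ltac:(lra)).
  pose proof (Cnorm_ge0 h) as Hh0.
  assert (HA : Cnorm (Csub (Csub (f (Cadd z h)) (f z)) (Csub (F N0 (Cadd z h)) (F N0 z))) <= eps/4 * Cnorm h).
  { apply (C_cv_bound (fun K => Csub (F K (Cadd z h)) (F K z)) _ _ _ N0).
    - apply C_cv_sub; apply (unif_pointwise _ _ M); auto.
      + unfold M. eapply Rle_trans. apply Cnorm_add. lra.
      + unfold M; lra.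
    - intros K HK.
      replace (Csub (Csub (F K (Cadd z h)) (F K z)) (Csub (F N0 (Cadd z h)) (F N0 z))) with
        (Csub ((fun w => Csub (F K w) (F N0 w)) (Cadd z h)) ((fun w => Csub (F K w) (F N0 w)) z)) by ring.
      apply (mvt_bound (fun w => Csub (F K w) (F N0 w)) (fun w => Csub (D K w) (D N0 w)) z h).
      + intro w. apply hasd_sub; auto.
      + intros t Ht. set (w := Cadd z (Cmul (RtoC t) h)).
        assert (Hw : Cnorm w <= M).
        { unfold w, M. eapply Rle_trans. apply Cnorm_add. rewrite Cnorm_mul, Cnorm_RtoC.
          rewrite Rabs_right by lra. nra. }
        replace (Csub (D K w) (D N0 w)) with (Csub (Csub (D K w) (g w)) (Csub (D N0 w) (g w))) by ring.
        eapply Rle_trans. apply Cnorm_sub.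
        pose proof (HN0 K w HK Hw). pose proof (HN0 N0 w (le_n _) Hw). lra. }
  pose proof (HN0 N0 z (le_n _) ltac:(unfold M; lra)).
  replace (Csub (Csub (f (Cadd z h)) (f z)) (Cmul (g z) h)) with
    (Cadd (Csub (Csub (f (Cadd z h)) (f z)) (Csub (F N0 (Cadd z h)) (F N0 z)))
      (Cadd (Csub (Csub (F N0 (Cadd z h)) (F N0 z)) (Cmul (D N0 z) h))
            (Cmul (Csub (D N0 z) (g z)) h))) by ring.
  eapply Rle_trans. apply Cnorm_add. eapply Rle_trans. apply Rplus_le_compat_l. apply Cnorm_add.
  rewrite Cnorm_mul.
  assert (Cnorm (Csub (D N0 z) (g z)) * Cnorm h <= eps/8 * Cnorm h) by (apply Rmult_le_compat_r; lra).
  nra.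
Qed.

Definition psum (f : nat -> CC -> CC) (n : nat) (z : CC) : CC := Csum (fun k => f k z) n.

Definition series_bounds (f : nat -> CC -> CC) :=
  forall M, exists A, (forall k, 0 <= A k) /\ summable A /\ forall k z, Cnorm z <= M -> Cnorm (f k z) <= A k.

Lemma series_unif f : series_bounds f -> forall M, unif_cv_disc (psum f) (Sfun f) M.
Proof.
  intros Hb M eps He. destruct (Hb M) as [A [HA0 [HA Hf]]].
  destruct (Mtest f A (fun z => Cnorm z <= M) HA0 HA Hf) as [_ H].
  destruct (H eps He) as [N HN]. exists N. intros n z Hn Hz. apply HN; auto.
Qed.

Lemma series_cv f : series_bounds f -> forall z, C_cv (fun n => psum f n z) (Sfun f z).
Proof. intros Hb z. apply (unif_pointwise _ _ (Cnorm z)). apply series_unif; auto. lra. Qed.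

Lemma ST (f f' : nat -> CC -> CC) : (forall k w, hasd (f k) w (f' k w)) ->
  series_bounds f -> series_bounds f' -> forall z, hasd (Sfun f) z (Sfun f' z).
Proof.
  intros Hd Hb Hb'. apply (ULD (psum f) (psum f')).
  - intros N w. unfold psum. apply hasd_Csum. auto.
  - apply series_unif; auto.
  - apply series_unif; auto.
Qed.

Lemma hasd_entire f f' : (forall z, hasd f z (f' z)) -> entire f.
Proof.
  intros H z0. exists (f' z0). intros eps He. destruct (H z0 (eps/2) ltac:(lra)) as [d [Hd Hh]].
  exists d; split; auto. intros h [Hh0 Hhd]. specialize (Hh h Hhd).
  assert (h <> C0) by (intro; subst; rewrite Cnorm_C0 in Hh0; lra).
  replace (Csub (Cdiv (Csub (f (Cadd z0 h)) (f z0)) h) (f' z0)) with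
    (Cdiv (Csub (Csub (f (Cadd z0 h)) (f z0)) (Cmul (f' z0) h)) h) by (field; auto).
  rewrite Cnorm_div. apply Rmult_lt_reg_r with (Cnorm h). auto.
  unfold Rdiv. rewrite Rmult_assoc, Rinv_l, Rmult_1_r by lra. nra.
Qed.

Lemma Rsum_sumf A n : Rsum A (S n) = sum_f_R0 A n.
Proof. induction n. simpl. ring. simpl Rsum. simpl sum_f_R0. rewrite <- IHn. reflexivity. Qed.

Lemma summable_sumf A : (exists l, Un_cv (fun n => sum_f_R0 A n) l) -> summable A.
Proof.
  intros [l Hl]. exists l. intros eps He. destruct (Hl eps He) as [N HN]. exists (S N).
  intros n Hn. destruct n. lia. rewrite Rsum_sumf. apply HN. lia.
Qed.

Lemma summable_sumf' A : summable A -> { l | Un_cv (fun n => sum_f_R0 A n) l }.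
Proof.
  intro H. apply constructive_indefinite_description.
  destruct H as [l Hl]. exists l. intros eps He. destruct (Hl eps He) as [N HN]. exists N.
  intros n Hn. rewrite <- Rsum_sumf. apply HN. lia.
Qed.

Lemma summable_comp A B : (forall k, 0 <= A k <= B k) -> summable B -> summable A.
Proof.
  intros H HB. apply summable_sumf. destruct (Rseries_CV_comp A B H (summable_sumf' B HB)) as [l Hl].
  eauto.
Qed.

Lemma Un_cv_scal u l c : Un_cv u l -> Un_cv (fun n => c * u n) (c * l).
Proof.
  intros H eps He. destruct (H (eps / (Rabs c + 1))) as [N HN].
  apply Rdiv_lt_0_compat; auto. pose proof (Rabs_pos c); lra.
  exists N. intros n Hn. specialize (HN n Hn). unfold R_dist in *.
  replace (c * u n - c * l) with (c * (u n - l)) by ring. rewrite Rabs_mult.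
  pose proof (Rabs_pos c). pose proof (Rabs_pos (u n - l)).
  apply Rle_lt_trans with (Rabs c * (eps / (Rabs c + 1))). apply Rmult_le_compat_l; lra.
  apply Rmult_lt_reg_r with (Rabs c + 1). lra. field_simplify; nra.
Qed.

Lemma Rsum_scal c A n : Rsum (fun k => c * A k) n = c * Rsum A n.
Proof. induction n; simpl. ring. rewrite IHn; ring. Qed.

Lemma summable_scal c A : summable A -> summable (fun k => c * A k).
Proof. intros [l Hl]. exists (c * l). eapply Un_cv_ext. 2: apply Un_cv_scal; eauto.
  intro n. simpl. rewrite Rsum_scal. reflexivity. Qed.

Definition expt (x : R) (k : nat) : R := / INR (fact k) * x ^ k.

Lemma expt_cv x : Un_cv (fun n => Rsum (expt x) n) (exp x).
Proof.
  pose proof (proj2_sig (exist_exp x)) as H. unfold exp_in, infinite_sum in H.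
  intros eps He. destruct (H eps He) as [N HN]. exists (S N). intros n Hn.
  destruct n. lia. rewrite Rsum_sumf. apply HN. lia.
Qed.

Lemma expt_nonneg x k : 0 <= x -> 0 <= expt x k.
Proof. intro. unfold expt. apply Rmult_le_pos. left; apply Rinv_0_lt_compat, INR_fact_lt_0.
  apply pow_le; auto. Qed.

Lemma summable_expt x : summable (expt x).
Proof. exists (exp x). apply expt_cv. Qed.

Lemma Rsum_expt_le x n : 0 <= x -> Rsum (expt x) n <= exp x.
Proof. intro. apply Rsum_le_lim. intro; apply expt_nonneg; auto. apply expt_cv. Qed.

Lemma fact_mul_le k m : (fact k * fact m <= fact (k + m))%nat.
Proof.
  induction k; simpl. lia.
  pose proof (Nat.mul_le_mono_l _ _ (S k) IHk). nia.
Qed.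

Lemma INR_fact_mul_le k m : INR (fact k) * INR (fact m) <= INR (fact (k + m)).
Proof. rewrite <- mult_INR. apply le_INR. apply fact_mul_le. Qed.

Lemma INR_fact_pos k : 0 < INR (fact k).
Proof. apply INR_fact_lt_0. Qed.

Lemma INR_fact_ge1 k : 1 <= INR (fact k).
Proof. replace 1 with (INR 1) by reflexivity. apply le_INR. pose proof (lt_O_fact k). lia. Qed.

Definition bcoef (m k : nat) : R := / (INR (fact k) * INR (fact (k + m))).

Lemma bcoef_pos m k : 0 < bcoef m k.
Proof. unfold bcoef. apply Rinv_0_lt_compat, Rmult_lt_0_compat; apply INR_fact_pos. Qed.

Definition bterm (m : nat) (k : nat) (w : CC) : CC := besselI_term m w k.

Definition dbterm (m : nat) (k : nat) (w : CC) : CC :=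
  Cmul (RtoC (bcoef m k)) (Cmul (Cmul (RtoC (INR (2*k+m))) (Cpow (Cdiv w (RtoC 2)) (pred (2*k+m))))
     (Cmul C1 (Cinv (RtoC 2)))).

Lemma hasd_half w : hasd (fun w => Cdiv w (RtoC 2)) w (Cmul C1 (Cinv (RtoC 2))).
Proof. apply (hasd_mul_const (fun w => w)). apply hasd_id. Qed.

Lemma hasd_bterm m k w : hasd (bterm m k) w (dbterm m k w).
Proof.
  unfold bterm, dbterm, besselI_term. fold (bcoef m k).
  apply hasd_scal. apply (hasd_comp (fun u => Cpow u (2*k+m)) (fun w => Cdiv w (RtoC 2))).
  apply hasd_half. apply hasd_pow.
Qed.

Lemma Cnorm_half w : Cnorm (Cdiv w (RtoC 2)) = Cnorm w / 2.
Proof. rewrite Cnorm_div, Cnorm_RtoC, Rabs_right by lra. reflexivity. Qed.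

Lemma pow_2k_m x k m : x ^ (2*k+m) = x ^ m * (x * x) ^ k.
Proof. rewrite pow_add, pow_mult. replace (x ^ 2) with (x * x) by ring. ring. Qed.

Lemma INR_le_pow2 n : INR n <= 2 ^ n.
Proof. induction n. simpl; lra. rewrite S_INR. simpl. pose proof (pow_le 2 n). assert (1 <= 2^n) by (apply pow_R1_Rle; lra). lra. Qed.

Lemma Cnorm_bterm m k w : Cnorm (bterm m k w) = bcoef m k * (Cnorm w / 2) ^ (2*k+m).
Proof.
  unfold bterm, besselI_term. fold (bcoef m k). rewrite Cnorm_mul, Cnorm_RtoC, Cnorm_pow, Cnorm_half.
  rewrite Rabs_right. reflexivity. left; apply bcoef_pos.
Qed.

Lemma Cnorm_dbterm m k w : Cnorm (dbterm m k w) =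
  bcoef m k * (INR (2*k+m) * (Cnorm w / 2) ^ (pred (2*k+m)) * / 2).
Proof.
  unfold dbterm. rewrite !Cnorm_mul, !Cnorm_RtoC, Cnorm_pow, Cnorm_half, Cnorm_C1, Cnorm_inv, Cnorm_RtoC.
  rewrite (Rabs_right (bcoef m k)) by (left; apply bcoef_pos).
  rewrite (Rabs_right (INR _)) by (apply Rle_ge, pos_INR).
  rewrite (Rabs_right 2) by lra. ring.
Qed.

Lemma bcoef_le m k : bcoef m k <= / INR (fact k).
Proof.
  unfold bcoef. apply Rinv_le_contravar. apply INR_fact_pos.
  pose proof (INR_fact_pos k). assert (1 <= INR (fact (k+m))).
  { replace 1 with (INR 1) by reflexivity. apply le_INR. pose proof (lt_O_fact (k+m)). lia. }
  nra.
Qed.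

Lemma bterm_bounds m : series_bounds (bterm m).
Proof.
  intro M. set (Q := Rabs M + 1). assert (HQ : 1 <= Q) by (unfold Q; pose proof (Rabs_pos M); lra).
  exists (fun k => Q ^ m * expt (Q * Q) k). split; [|split].
  - intro k. apply Rmult_le_pos. apply pow_le; lra. apply expt_nonneg; nra.
  - apply summable_scal, summable_expt.
  - intros k w Hw. rewrite Cnorm_bterm. unfold expt.
    assert (Cnorm w / 2 <= Q) by (unfold Q; pose proof (Rle_abs M); pose proof (Cnorm_ge0 w); lra).
    assert ((Cnorm w / 2) ^ (2*k+m) <= Q ^ (2*k+m)) by (apply pow_incr; pose proof (Cnorm_ge0 w); lra).
    rewrite (pow_2k_m Q) in H0.
    pose proof (bcoef_le m k). pose proof (bcoef_pos m k).
    assert (0 <= (Cnorm w / 2) ^ (2*k+m)) by (apply pow_le; pose proof (Cnorm_ge0 w); lra).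
    eapply Rle_trans. apply Rmul_le. split. lra. apply H1. split. auto. apply H0.
    right. ring.
Qed.

Lemma dbterm_bounds m : series_bounds (dbterm m).
Proof.
  intro M. set (Q := Rabs M + 1). assert (HQ : 1 <= Q) by (unfold Q; pose proof (Rabs_pos M); lra).
  exists (fun k => (2*Q) ^ m * expt ((2*Q) * (2*Q)) k). split; [|split].
  - intro k. apply Rmult_le_pos. apply pow_le; lra. apply expt_nonneg; nra.
  - apply summable_scal, summable_expt.
  - intros k w Hw. rewrite Cnorm_dbterm. unfold expt.
    set (n := (2*k+m)%nat).
    assert (Cnorm w / 2 <= Q) by (unfold Q; pose proof (Rle_abs M); pose proof (Cnorm_ge0 w); lra).
    assert (H1 : (Cnorm w / 2) ^ pred n <= Q ^ n).
    { eapply Rle_trans. apply pow_incr. split. pose proof (Cnorm_ge0 w); lra. apply H.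
      apply Rle_pow; auto. lia. }
    assert (H2 : INR n * (Cnorm w / 2) ^ pred n * / 2 <= (2 * Q) ^ n).
    { rewrite Rpow_mult_distr. pose proof (INR_le_pow2 n). pose proof (pos_INR n).
      assert (0 <= (Cnorm w / 2) ^ pred n) by (apply pow_le; pose proof (Cnorm_ge0 w); lra).
      assert (0 <= Q ^ n) by (apply pow_le; lra).
      assert (INR n * (Cnorm w / 2) ^ pred n <= 2 ^ n * Q ^ n) by (apply Rmul_le; lra). assert (0 <= INR n * (Cnorm w / 2) ^ pred n) by (apply Rmult_le_pos; auto). lra. }
    unfold n in H2. rewrite (pow_2k_m (2*Q)) in H2.
    pose proof (bcoef_le m k). pose proof (bcoef_pos m k).
    assert (0 <= INR n * (Cnorm w / 2) ^ pred n * / 2).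
    { apply Rmult_le_pos. apply Rmult_le_pos. apply pos_INR. apply pow_le; pose proof (Cnorm_ge0 w); lra. lra. }
    eapply Rle_trans. apply Rmul_le. split. lra. apply H0. split. auto. apply H2.
    right. ring.
Qed.

Lemma besselI_Sfun m w : besselI m w = Sfun (bterm m) w.
Proof. reflexivity. Qed.

Definition dbesselI (m : nat) (w : CC) : CC := Sfun (dbterm m) w.

Lemma hasd_besselI m w : hasd (besselI m) w (dbesselI m w).
Proof.
  apply ST. intros; apply hasd_bterm. apply bterm_bounds. apply dbterm_bounds.
Qed.

Lemma Sfun_bound f z B : series_bounds f ->
  (forall n, Rsum (fun k => Cnorm (f k z)) n <= B) -> Cnorm (Sfun f z) <= B.
Proof.
  intros Hb HB. replace (Sfun f z) with (Csub (Sfun f z) C0) by ring.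
  apply (C_cv_bound (fun n => psum f n z) _ _ _ 0 (series_cv f Hb z)).
  intros n _. replace (Csub (psum f n z) C0) with (psum f n z) by ring.
  eapply Rle_trans. apply Cnorm_Csum_le. apply HB.
Qed.

Lemma besselI_bound m w : Cnorm (besselI m w) <=
  (Cnorm w / 2) ^ m / INR (fact m) * exp ((Cnorm w / 2) * (Cnorm w / 2)).
Proof.
  set (q := Cnorm w / 2). assert (Hq : 0 <= q) by (unfold q; pose proof (Cnorm_ge0 w); lra).
  rewrite besselI_Sfun. apply Sfun_bound. apply bterm_bounds. intro n.
  eapply Rle_trans. apply Rsum_le with (B := fun k => q ^ m / INR (fact m) * expt (q*q) k).
  - intro k. rewrite Cnorm_bterm. fold q. rewrite pow_2k_m. unfold expt, bcoef.
    pose proof (INR_fact_mul_le k m). pose proof (INR_fact_pos k). pose proof (INR_fact_pos m).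
    pose proof (INR_fact_pos (k+m)).
    assert (/ (INR (fact k) * INR (fact (k + m))) <= / INR (fact k) * / INR (fact m)).
    { pose proof (INR_fact_ge1 k). rewrite <- Rinv_mult. apply Rinv_le_contravar; nra. }
    assert (0 <= q ^ m * (q*q)^k) by (apply Rmult_le_pos; apply pow_le; nra).
    assert (0 <= / (INR (fact k) * INR (fact (k + m)))) by (left; apply Rinv_0_lt_compat; nra).
    unfold Rdiv. nra.
  - rewrite Rsum_scal. apply Rmult_le_compat_l.
    unfold Rdiv. apply Rmult_le_pos. apply pow_le; auto. left; apply Rinv_0_lt_compat, INR_fact_pos.
    apply Rsum_expt_le. nra.
Qed.

Lemma dbesselI_bound m w : Cnorm (dbesselI (S m) w) <=
  (Cnorm w / 2) ^ m / INR (fact m) * exp ((Cnorm w / 2) * (Cnorm w / 2)).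
Proof.
  set (q := Cnorm w / 2). assert (Hq : 0 <= q) by (unfold q; pose proof (Cnorm_ge0 w); lra).
  unfold dbesselI. apply Sfun_bound. apply dbterm_bounds. intro n.
  eapply Rle_trans. apply Rsum_le with (B := fun k => q ^ m / INR (fact m) * expt (q*q) k).
  - intro k. rewrite Cnorm_dbterm. fold q.
    replace (pred (2*k + S m)) with (2*k+m)%nat by lia. rewrite pow_2k_m. unfold expt, bcoef.
    replace (k + S m)%nat with (S (k + m)) by lia.
    change (fact (S (k+m))) with (S (k+m) * fact (k+m))%nat. rewrite mult_INR.
    pose proof (INR_fact_mul_le k m). pose proof (INR_fact_pos k). pose proof (INR_fact_pos m).
    pose proof (INR_fact_pos (k+m)).
    assert (HS : 0 < INR (S (k+m))) by (apply lt_0_INR; lia).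
    assert (Hn : INR (2*k + S m) * / 2 <= INR (S (k+m))).
    { replace (INR (2*k + S m)) with (2 * INR k + INR m + 1) by (rewrite plus_INR, mult_INR; change (INR 2) with (1+1); rewrite S_INR; ring).
      replace (INR (S (k+m))) with (INR k + INR m + 1) by (rewrite S_INR, plus_INR; ring).
      pose proof (pos_INR k). pose proof (pos_INR m). lra. }
    assert (E1 : / (INR (fact k) * (INR (S (k + m)) * INR (fact (k + m)))) * INR (S (k+m)) =
       / (INR (fact k) * INR (fact (k + m)))) by (field; lra).
    assert (/ (INR (fact k) * INR (fact (k + m))) <= / INR (fact k) * / INR (fact m)).
    { pose proof (INR_fact_ge1 k). rewrite <- Rinv_mult. apply Rinv_le_contravar; nra. }
    assert (0 <= q ^ m * (q*q)^k) by (apply Rmult_le_pos; apply pow_le; nra).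
    set (c := / (INR (fact k) * (INR (S (k + m)) * INR (fact (k + m))))) in *.
    assert (0 <= c) by (unfold c; left; apply Rinv_0_lt_compat; apply Rmult_lt_0_compat; [|apply Rmult_lt_0_compat]; auto).
    replace (c * (INR (2 * k + S m) * (q ^ m * (q * q) ^ k) * / 2)) with
      ((c * (INR (2 * k + S m) * / 2)) * (q ^ m * (q * q) ^ k)) by ring.
    assert (c * (INR (2 * k + S m) * / 2) <= c * INR (S (k+m))) by (apply Rmult_le_compat_l; lra).
    unfold Rdiv. rewrite E1 in H6. nra.
  - rewrite Rsum_scal. apply Rmult_le_compat_l.
    unfold Rdiv. apply Rmult_le_pos. apply pow_le; auto. left; apply Rinv_0_lt_compat, INR_fact_pos.
    apply Rsum_expt_le. nra.
Qed.

Lemma besselI_conj m w : besselI m (Cconj w) = Cconj (besselI m w).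
Proof.
  rewrite !besselI_Sfun. apply Clim_eq.
  pose proof (series_cv _ (bterm_bounds m) w) as H.
  intros eps He. destruct (H eps He) as [N HN]. exists N. intros n Hn. specialize (HN n Hn).
  replace (Csum (fun k => bterm m k (Cconj w)) n) with (Cconj (psum (bterm m) n w)).
  rewrite <- Cconj_sub, Cnorm_conj. auto.
  unfold psum. rewrite Cconj_Csum. apply Csum_ext. intro k.
  unfold bterm, besselI_term. rewrite Cconj_mul, Cconj_RtoC, Cconj_pow, Cconj_div, Cconj_RtoC. reflexivity.
Qed.

Lemma summable_bounded A K : (forall k, 0 <= A k) -> (forall n, Rsum A n <= K) -> summable A.
Proof.
  intros H0 HK. destruct (growing_cv (fun n => Rsum A n)) as [l Hl].
  - intro n. simpl. pose proof (H0 n); lra.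
  - exists K. intros x [i Hi]. subst. apply HK.
  - exists l; auto.
Qed.

Lemma Rsum_geom n : Rsum (fun k => (/2)^k) n = 2 - 2 * (/2)^n.
Proof. induction n; simpl. field. rewrite IHn. field. Qed.

Lemma summable_eventually A N : (forall k, 0 <= A k) -> (forall k, (k >= N)%nat -> A k <= (/2)^k) ->
  summable A.
Proof.
  intros H0 H. apply (summable_bounded A (Rsum A N + 2)); auto.
  assert (Hg : forall n, 0 <= (/2)^n) by (intro; apply pow_le; lra).
  assert (forall n, Rsum A n <= Rsum A N + Rsum (fun k => (/2)^k) n).
  { induction n.
    - simpl. pose proof (Rsum_nonneg A N H0). lra.
    - destruct (Compare_dec.le_lt_dec N n).
      + simpl. specialize (H n l). lra.
      + simpl. assert (Rsum A (S n) <= Rsum A N) by (apply Rsum_mono; auto).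
        simpl in H1. pose proof (Rsum_nonneg (fun k => (/2)^k) n Hg). pose proof (Hg n). lra. }
  intro n. specialize (H1 n). rewrite Rsum_geom in H1. pose proof (Hg n). lra.
Qed.

Lemma pow_fact_le_exp x n : 0 <= x -> x ^ n / INR (fact n) <= exp x.
Proof.
  intro Hx. eapply Rle_trans. 2: apply (Rsum_expt_le x (S n) Hx).
  simpl. pose proof (Rsum_nonneg (expt x) n (fun k => expt_nonneg x k Hx)).
  unfold expt at 2. unfold Rdiv. rewrite Rmult_comm. lra.
Qed.

Lemma exp_mul_pow x n : exp (INR n * x) = exp x ^ n.
Proof. induction n. simpl. rewrite Rmult_0_l. apply exp_0.
  rewrite S_INR, Rmult_plus_distr_r, Rmult_1_l, exp_plus, IHn. simpl. ring. Qed.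

Lemma key_summable C : 0 <= C ->
  summable (fun k => (C * sqrt (INR (S k))) ^ (S k) / INR (fact (S k))).
Proof.
  intro HC. set (D := 2 * C * exp 1).
  assert (HD : 0 <= D) by (unfold D; pose proof (exp_pos 1); nra).
  destruct (INR_unbounded (D * D)) as [N HN].
  apply (summable_eventually _ N).
  - intro k. apply Rmult_le_pos. apply pow_le. apply Rmult_le_pos; auto. apply sqrt_pos.
    left; apply Rinv_0_lt_compat, INR_fact_pos.
  - intros k Hk. set (m := S k). set (s := sqrt (INR m)).
    assert (Hm : 0 < INR m) by (unfold m; apply lt_0_INR; lia).
    assert (Hs : 0 < s) by (apply sqrt_lt_R0; auto).
    assert (Hss : s * s = INR m) by (apply sqrt_sqrt; lra).
    assert (HsD : D < s).
    { assert (INR m > D * D). { unfold m. rewrite S_INR. apply le_INR in Hk. lra. }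
      nra. }
    pose proof (pow_fact_le_exp (INR m) m ltac:(lra)) as Hf.
    rewrite <- (Rmult_1_r (INR m)), exp_mul_pow, Rmult_1_r in Hf.
    rewrite Rpow_mult_distr.
    assert (E1 : INR m ^ m = s ^ m * s ^ m) by (rewrite <- Rpow_mult_distr, Hss; reflexivity).
    rewrite E1 in Hf.
    assert (Hsm : 0 < s ^ m) by (apply pow_lt; auto).
    pose proof (INR_fact_pos m).
    assert (H2 : s ^ m / INR (fact m) <= exp 1 ^ m / s ^ m).
    { apply Rmult_le_reg_r with (s ^ m). auto.
      unfold Rdiv. replace (exp 1 ^ m * / s ^ m * s ^ m) with (exp 1 ^ m) by (field; lra).
      replace (s ^ m * / INR (fact m) * s ^ m) with (s ^ m * s ^ m / INR (fact m)) by (field; lra). auto. }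
    assert (H3 : C ^ m * s ^ m / INR (fact m) <= (C * exp 1 / s) ^ m).
    { replace ((C * exp 1 / s) ^ m) with (C ^ m * (exp 1 ^ m / s ^ m)) by (unfold Rdiv; rewrite !Rpow_mult_distr, pow_inv; ring).
      replace (C ^ m * s ^ m / INR (fact m)) with (C^m * (s^m / INR (fact m))) by (unfold Rdiv; ring).
      apply Rmult_le_compat_l; auto. apply pow_le; auto. }
    eapply Rle_trans. apply H3.
    apply Rle_trans with ((/2)^m). apply pow_incr. split.
    apply Rmult_le_pos. pose proof (exp_pos 1). nra. left; apply Rinv_0_lt_compat; auto.
    apply Rmult_le_reg_r with s. auto. unfold Rdiv. rewrite Rmult_assoc, Rinv_l, Rmult_1_r by lra.
    unfold D in HsD. lra.
    unfold m. simpl. assert (0 <= (/2)^k) by (apply pow_le; lra). lra.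
Qed.

Lemma Cnorm_Csqrt w : Cnorm (Csqrt w) = sqrt (Cnorm w).
Proof.
  pose proof (Re_le w). pose proof (Cnorm_ge0 w). pose proof (Rle_abs (Re w)).
  pose proof (Rle_abs (- Re w)). rewrite Rabs_Ropp in H2.
  unfold Csqrt. unfold Cnorm at 1. simpl. f_equal.
  rewrite sqrt_sqrt by lra.
  assert (HS : (if Rle_dec 0 (Im w) then 1 else -1) * (if Rle_dec 0 (Im w) then 1 else -1) = 1)
    by (destruct (Rle_dec 0 (Im w)); ring).
  replace ((if Rle_dec 0 (Im w) then 1 else -1) * sqrt ((Cnorm w - Re w) / 2) *
   ((if Rle_dec 0 (Im w) then 1 else -1) * sqrt ((Cnorm w - Re w) / 2))) with
   ((if Rle_dec 0 (Im w) then 1 else -1) * (if Rle_dec 0 (Im w) then 1 else -1) *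
    (sqrt ((Cnorm w - Re w) / 2) * sqrt ((Cnorm w - Re w) / 2))) by ring.
  rewrite HS, sqrt_sqrt by lra. field.
Qed.

Lemma Re_Csqrt w : Re (Csqrt w) = sqrt ((Cnorm w + Re w) / 2).
Proof. reflexivity. Qed.

Lemma Cexp_diff_lower u : 0 <= Re u ->
  exp (Re u) - exp (- Re u) <= Cnorm (Csub (Cexp u) (Cexp (Copp u))).
Proof.
  intro Hx. set (x := Re u). set (y := Im u).
  assert (exp (- x) <= exp x) by (destruct (Req_dec x 0); [rewrite H, Ropp_0; lra | left; apply exp_increasing; unfold x in *; lra]).
  assert (0 < exp (-x)) by apply exp_pos.
  apply Rle_trans with (sqrt ((exp x - exp (-x)) * (exp x - exp (-x)))).
  rewrite sqrt_square; lra.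
  apply sqrt_le_1_alt. simpl. fold x y. rewrite cos_neg, sin_neg.
  pose proof (sin2_cos2 y). unfold Rsqr in H1.
  assert ((exp x - exp (-x)) * (exp x - exp (-x)) <= (exp x + exp (-x)) * (exp x + exp (-x))) by nra.
  assert (0 <= sin y * sin y) by nra.
  nra.
Qed.

Lemma Cexp_sum_upper u : Cnorm (Cadd (Cexp u) (Cexp (Copp u))) <= exp (Re u) + exp (- Re u).
Proof.
  set (x := Re u). set (y := Im u).
  assert (0 < exp (-x)) by apply exp_pos. assert (0 < exp x) by apply exp_pos.
  apply Cnorm_le_sq. lra. simpl. fold x y. rewrite cos_neg, sin_neg.
  pose proof (sin2_cos2 y). unfold Rsqr in H1.
  assert (0 <= sin y * sin y) by nra. assert (0 <= cos y * cos y) by nra.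
  set (E := exp x) in *. set (F := exp (-x)) in *. set (c := cos y) in *. set (s := sin y) in *.
  assert ((E - F) * (E - F) * (s * s) <= (E + F) * (E + F) * (s * s)) by (apply Rmult_le_compat_r; nra).
  replace ((E * c + F * c) * (E * c + F * c) + (E * s + F * - s) * (E * s + F * - s))
    with ((E + F) * (E + F) * (c * c) + (E - F) * (E - F) * (s * s)) by ring.
  assert ((E+F)*(E+F) = (E+F)*(E+F)*(s*s) + (E+F)*(E+F)*(c*c)) by (rewrite <- Rmult_plus_distr_l, H1; ring).
  lra.
Qed.

Section Coefs.
Variables (gamma sigma LL : R).
Hypotheses (hgamma : 0 < gamma) (hsigma : 0 < sigma) (hL : 0 < LL).

Definition uarg (m : nat) : CC := Cmul (Csqrt (Cmul (jmg gamma m) (RtoC (sigma * sigma)))) (RtoC LL).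

Lemma Re_uarg m : Re (uarg m) = LL * sqrt (INR m * gamma * (sigma * sigma) / 2).
Proof.
  unfold uarg. set (W := Cmul (jmg gamma m) (RtoC (sigma * sigma))).
  replace (Re (Cmul (Csqrt W) (RtoC LL))) with (Re (Csqrt W) * LL) by (simpl; ring).
  rewrite Re_Csqrt. unfold W.
  assert (Cnorm (Cmul (jmg gamma m) (RtoC (sigma * sigma))) = INR m * gamma * (sigma * sigma)).
  { rewrite Cnorm_mul, Cnorm_RtoC. unfold jmg. unfold Cnorm at 1. simpl.
    replace (0 * 0 + INR m * gamma * (INR m * gamma)) with ((INR m * gamma) * (INR m * gamma)) by ring.
    rewrite sqrt_square. rewrite Rabs_right. ring. nra.
    pose proof (pos_INR m); nra. }
  rewrite H. simpl. rewrite Rmult_comm. f_equal. f_equal. unfold Rdiv. ring.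
Qed.

Definition t1 := LL * sqrt (gamma * (sigma * sigma) / 2).
Definition Y1 := exp t1.

Lemma t1_pos : 0 < t1.
Proof. unfold t1. apply Rmult_lt_0_compat; auto. apply sqrt_lt_R0. apply Rdiv_lt_0_compat; [apply Rmult_lt_0_compat; nra | lra]. Qed.

Lemma Y1_gt1 : 1 < Y1.
Proof. unfold Y1. rewrite <- exp_0. apply exp_increasing. apply t1_pos. Qed.

Lemma Re_uarg_ge m : (1 <= m)%nat -> t1 <= Re (uarg m).
Proof.
  intro Hm. rewrite Re_uarg. unfold t1. apply Rmult_le_compat_l. lra.
  apply sqrt_le_1_alt. apply le_INR in Hm. simpl in Hm.
  assert (0 < gamma * (sigma * sigma)) by (apply Rmult_lt_0_compat; [lra | apply Rmult_lt_0_compat; lra]).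
  unfold Rdiv. nra.
Qed.

Lemma X_ge m : (1 <= m)%nat -> Y1 <= exp (Re (uarg m)).
Proof.
  intro Hm. unfold Y1. destruct (Re_uarg_ge m Hm). left; apply exp_increasing; auto. rewrite H; lra.
Qed.

Lemma exp_neg_inv x : exp (- x) = / exp x.
Proof. apply exp_Ropp. Qed.

Lemma sinh_lower m : (1 <= m)%nat -> Y1 - / Y1 <= 2 * Cnorm (Csinh (uarg m)).
Proof.
  intro Hm. unfold Csinh. rewrite Cnorm_div, Cnorm_RtoC, Rabs_right by lra.
  pose proof (Cexp_diff_lower (uarg m) ltac:(pose proof (Re_uarg_ge m Hm); pose proof t1_pos; lra)).
  rewrite exp_neg_inv in H. pose proof (X_ge m Hm). pose proof Y1_gt1.
  set (X := exp (Re (uarg m))) in *.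
  assert (/ X <= / Y1) by (apply Rinv_le_contravar; lra).
  replace (2 * (Cnorm (Csub (Cexp (uarg m)) (Cexp (Copp (uarg m)))) / 2)) with
    (Cnorm (Csub (Cexp (uarg m)) (Cexp (Copp (uarg m))))) by field. lra.
Qed.

Lemma div_mul_cancel1 a b c : b <> 0 -> a / b * (b * c) = a * c.
Proof. intro; field; auto. Qed.
Lemma div_mul_cancel2 a b c : b <> 0 -> a / b * (c * b) = a * c.
Proof. intro; field; auto. Qed.

Lemma mul_inv_cancel3 a b c : a <> 0 -> a * (b * / a * c) = b * c.
Proof. intro; field; auto. Qed.

Definition cb := (Y1 + / Y1) / (Y1 - / Y1).
Definition sb := 2 / (Y1 - / Y1).

Lemma Y1_diff_pos : 0 < Y1 - / Y1.
Proof. pose proof Y1_gt1. assert (/ Y1 < 1). { rewrite <- Rinv_1. apply Rinv_lt_contravar; lra. } lra. Qed.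

Lemma sinh_pos m : (1 <= m)%nat -> 0 < Cnorm (Csinh (uarg m)).
Proof. intro Hm. pose proof (sinh_lower m Hm). pose proof Y1_diff_pos. lra. Qed.

Lemma coth_bound m : (1 <= m)%nat -> Cnorm (Ccoth (uarg m)) <= cb.
Proof.
  intro Hm. unfold Ccoth. rewrite Cnorm_div.
  pose proof (sinh_pos m Hm).
  unfold Ccosh. rewrite Cnorm_div, Cnorm_RtoC, Rabs_right by lra.
  pose proof (Cexp_sum_upper (uarg m)). rewrite exp_neg_inv in H0.
  unfold Csinh in *. rewrite Cnorm_div, Cnorm_RtoC, Rabs_right in * by lra.
  pose proof (Cexp_diff_lower (uarg m) ltac:(pose proof (Re_uarg_ge m Hm); pose proof t1_pos; lra)).
  rewrite exp_neg_inv in H1.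
  pose proof (X_ge m Hm). pose proof Y1_gt1. pose proof Y1_diff_pos.
  set (X := exp (Re (uarg m))) in *.
  set (S := Cnorm (Csub (Cexp (uarg m)) (Cexp (Copp (uarg m))))) in *.
  set (Cc := Cnorm (Cadd (Cexp (uarg m)) (Cexp (Copp (uarg m))))) in *.
  assert (HX : 0 < X - / X).
  { assert (/ X <= / Y1) by (apply Rinv_le_contravar; lra). lra. }
  replace (Cc / 2 / (S / 2)) with (Cc / S) by (field; lra).
  unfold cb. apply Rle_trans with ((X + / X) / (X - / X)).
  - unfold Rdiv. apply Rle_trans with ((X + / X) * / S).
    apply Rmult_le_compat_r. left; apply Rinv_0_lt_compat; lra. auto.
    apply Rmult_le_compat_l. pose proof (Rinv_0_lt_compat X ltac:(lra)). lra.
    apply Rinv_le_contravar; lra.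
  - assert (0 < Y1) by lra. assert (0 < X) by lra.
    apply Rmult_le_reg_r with ((X - / X) * (Y1 - / Y1)). nra.
    rewrite div_mul_cancel1 by lra. rewrite div_mul_cancel2 by lra.
    apply Rmult_le_reg_r with (X * Y1). nra.
    replace ((X + / X) * (Y1 - / Y1) * (X * Y1)) with ((X*X + 1) * (Y1*Y1 - 1)) by (field; lra).
    replace ((Y1 + / Y1) * (X - / X) * (X * Y1)) with ((Y1*Y1 + 1) * (X*X - 1)) by (field; lra).
    nra.
Qed.

Lemma csch_bound m : (1 <= m)%nat -> Cnorm (Cinv (Csinh (uarg m))) <= sb.
Proof.
  intro Hm. rewrite Cnorm_inv. pose proof (sinh_lower m Hm). pose proof Y1_diff_pos.
  unfold sb. pose proof (sinh_pos m Hm).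
  apply Rmult_le_reg_r with (Cnorm (Csinh (uarg m))). auto.
  rewrite Rinv_l by lra. unfold Rdiv.
  apply Rmult_le_reg_l with (Y1 - / Y1). auto.
  rewrite mul_inv_cancel3 by lra.
  lra.
Qed.

Lemma Cnorm_sqrt_jmg m : Cnorm (Cdiv (Csqrt (jmg gamma m)) (RtoC sigma)) = sqrt (INR m) * (sqrt gamma / sigma).
Proof.
  rewrite Cnorm_div, Cnorm_Csqrt, Cnorm_RtoC, Rabs_right by lra.
  unfold jmg, Cnorm at 1. simpl.
  replace (0 * 0 + INR m * gamma * (INR m * gamma)) with ((INR m * gamma) * (INR m * gamma)) by ring.
  rewrite sqrt_square by (pose proof (pos_INR m); nra).
  rewrite sqrt_mult by (try apply pos_INR; lra). unfold Rdiv; ring.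
Qed.

Definition Ka := sqrt gamma / sigma * cb.
Definition Kb := sqrt gamma / sigma * sb.

Lemma cb_pos : 0 < cb.
Proof. unfold cb. pose proof Y1_gt1. pose proof Y1_diff_pos.
  apply Rdiv_lt_0_compat; auto. pose proof (Rinv_0_lt_compat Y1). lra. Qed.
Lemma sb_pos : 0 < sb.
Proof. unfold sb. pose proof Y1_diff_pos. apply Rdiv_lt_0_compat; lra. Qed.
Lemma Ka_pos : 0 < Ka.
Proof. unfold Ka. pose proof cb_pos. apply Rmult_lt_0_compat; auto. apply Rdiv_lt_0_compat; auto. apply sqrt_lt_R0; auto. Qed.
Lemma Kb_pos : 0 < Kb.
Proof. unfold Kb. pose proof sb_pos. apply Rmult_lt_0_compat; auto. apply Rdiv_lt_0_compat; auto. apply sqrt_lt_R0; auto. Qed.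

Lemma a_bound m : (1 <= m)%nat -> Cnorm (a_coef gamma sigma LL m) <= Ka * sqrt (INR m).
Proof.
  intro Hm. unfold a_coef. rewrite Cnorm_mul. fold (uarg m). rewrite Cnorm_sqrt_jmg.
  pose proof (coth_bound m Hm). pose proof (sqrt_pos (INR m)).
  assert (0 <= sqrt gamma / sigma) by (apply Rlt_le, Rdiv_lt_0_compat; auto; apply sqrt_lt_R0; auto).
  unfold Ka. replace (sqrt gamma / sigma * cb * sqrt (INR m)) with (sqrt (INR m) * (sqrt gamma / sigma) * cb) by ring.
  apply Rmult_le_compat_l. nra. auto.
Qed.

Lemma b_bound m : (1 <= m)%nat -> Cnorm (b_coef gamma sigma LL m) <= Kb * sqrt (INR m).
Proof.
  intro Hm. unfold b_coef. rewrite Cnorm_mul. fold (uarg m). rewrite Cnorm_sqrt_jmg.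
  pose proof (csch_bound m Hm). pose proof (sqrt_pos (INR m)).
  assert (0 <= sqrt gamma / sigma) by (apply Rlt_le, Rdiv_lt_0_compat; auto; apply sqrt_lt_R0; auto).
  unfold Kb. replace (sqrt gamma / sigma * sb * sqrt (INR m)) with (sqrt (INR m) * (sqrt gamma / sigma) * sb) by ring.
  apply Rmult_le_compat_l. nra. auto.
Qed.

End Coefs.

Lemma hasd_sq z : hasd (fun w => Cmul w w) z (Cmul (RtoC 2) z).
Proof.
  eapply hasd_eq_l. 2: apply hasd_mul; apply hasd_id.
  replace (RtoC 2) with (Cadd C1 C1) by (apply CC_eq; simpl; ring). ring.
Qed.

Section Terms.
Variables (gamma LL r phi phi0 : R).

Definition Eexp (al : CC) (z : CC) : CC := Cexp (Copp (Cmul al (Cadd (RtoC (r*r)) (Cmul z z)))).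
Definition dEexp (al : CC) (z : CC) : CC := Cmul (Eexp al z) (Copp (Cmul al (Cmul (RtoC 2) z))).
Definition Kbe (be : CC) : CC := Cmul (RtoC 2) be.
Definition Ibes (be : CC) (m : nat) (z : CC) : CC := besselI m (Cmul (Kbe be) (Cmul z (RtoC r))).
Definition dIbes (be : CC) (m : nat) (z : CC) : CC :=
  Cmul (dbesselI m (Cmul (Kbe be) (Cmul z (RtoC r)))) (Cmul (Kbe be) (RtoC r)).
Definition Ph (s : R) (z : CC) : CC := phase gamma LL s phi phi0 z.
Definition dPh (s : R) (z : CC) : CC :=
  Cmul (Ph s z) (Cmul (Cmul Cj (RtoC s)) (Copp (Cmul (RtoC (gamma*LL)) (Cmul (RtoC 2) z)))).

Definition T (al be : CC) (s : R) (m : nat) (z : CC) : CC :=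
  Cmul (Cmul (RtoC r) (Cmul be (Cmul (Eexp al z) (Ibes be m z)))) (Ph s z).
Definition dT (al be : CC) (s : R) (m : nat) (z : CC) : CC :=
  Cmul (Cmul (RtoC r) be)
    (Cadd (Cadd (Cmul (Cmul (dEexp al z) (Ibes be m z)) (Ph s z))
                (Cmul (Cmul (Eexp al z) (dIbes be m z)) (Ph s z)))
          (Cmul (Cmul (Eexp al z) (Ibes be m z)) (dPh s z))).

Lemma hasd_Eexp al z : hasd (Eexp al) z (dEexp al z).
Proof.
  unfold Eexp, dEexp.
  eapply hasd_eq_l. 2: apply (hasd_comp Cexp (fun z => Copp (Cmul al (Cadd (RtoC (r*r)) (Cmul z z))))).
  2: apply hasd_opp, hasd_scal, hasd_add. 2: apply hasd_const. 2: apply hasd_sq. 2: apply hasd_exp.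
  unfold Eexp, dEexp, Ibes, dIbes, Ph, dPh, phase, Kbe, Csub; ring.
Qed.

Lemma hasd_Ibes be m z : hasd (Ibes be m) z (dIbes be m z).
Proof.
  unfold Ibes, dIbes.
  eapply hasd_eq_l. 2: apply (hasd_comp (besselI m) (fun z => Cmul (Kbe be) (Cmul z (RtoC r)))).
  2: apply hasd_scal, (hasd_mul_const (fun w => w)), hasd_id. 2: apply hasd_besselI.
  unfold Eexp, dEexp, Ibes, dIbes, Ph, dPh, phase, Kbe, Csub; ring.
Qed.

Lemma hasd_Ph s z : hasd (Ph s) z (dPh s z).
Proof.
  unfold Ph, dPh, phase.
  eapply hasd_eq_l. 2: apply (hasd_comp Cexp (fun z => Cmul (Cmul Cj (RtoC s))
    (Csub (RtoC (phi - phi0)) (Cmul (RtoC (gamma * LL)) (Cmul z z))))).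
  2: apply hasd_scal, hasd_sub. 2: apply hasd_const. 2: apply hasd_scal, hasd_sq. 2: apply hasd_exp.
  unfold Eexp, dEexp, Ibes, dIbes, Ph, dPh, phase, Kbe, Csub; ring.
Qed.

Lemma hasd_T al be s m z : hasd (T al be s m) z (dT al be s m z).
Proof.
  unfold T, dT.
  eapply hasd_eq_l. 2: apply (hasd_mul (fun z => Cmul (RtoC r) (Cmul be (Cmul (Eexp al z) (Ibes be m z)))) (Ph s)).
  2: apply hasd_scal, hasd_scal, hasd_mul. 2: apply hasd_Eexp. 2: apply hasd_Ibes. 2: apply hasd_Ph.
  unfold Eexp, dEexp, Ibes, dIbes, Ph, dPh, phase, Kbe, Csub; ring.
Qed.

End Terms.

Lemma exp_mono x y : x <= y -> exp x <= exp y.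
Proof. intro H. destruct H. left; apply exp_increasing; auto. subst; lra. Qed.

Lemma Cnorm_zz z : Cnorm (Cmul z z) = Cnorm z * Cnorm z.
Proof. apply Cnorm_mul. Qed.

Section Bounds.
Variables (gamma LL r phi phi0 : R).
Hypothesis hr : 0 < r.

Lemma Eexp_bound al z X : Cnorm z <= X ->
  Cnorm (Eexp r al z) <= exp (Cnorm al * (r*r + X*X)).
Proof.
  intro Hz. unfold Eexp. eapply Rle_trans. apply Cnorm_exp_le. apply exp_mono.
  rewrite Cnorm_opp, Cnorm_mul. apply Rmult_le_compat_l. apply Cnorm_ge0.
  eapply Rle_trans. apply Cnorm_add. rewrite Cnorm_RtoC, Cnorm_zz, Rabs_right by nra.
  pose proof (Cnorm_ge0 z). apply Rplus_le_compat_l. apply Rmul_le; lra.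
Qed.

Lemma dEexp_norm al z : Cnorm (dEexp r al z) = Cnorm (Eexp r al z) * (Cnorm al * (2 * Cnorm z)).
Proof. unfold dEexp. rewrite Cnorm_mul, Cnorm_opp, !Cnorm_mul, Cnorm_RtoC, Rabs_right by lra. reflexivity. Qed.

Lemma Ph_bound s z X : Cnorm z <= X ->
  Cnorm (Ph gamma LL phi phi0 s z) <= exp (Rabs s * (Rabs (phi - phi0) + Rabs (gamma * LL) * (X * X))).
Proof.
  intro Hz. unfold Ph, phase. eapply Rle_trans. apply Cnorm_exp_le. apply exp_mono.
  rewrite !Cnorm_mul, Cnorm_Cj, Cnorm_RtoC, Rmult_1_l. apply Rmult_le_compat_l. apply Rabs_pos.
  eapply Rle_trans. apply Cnorm_sub. rewrite Cnorm_RtoC, Cnorm_mul, Cnorm_zz, Cnorm_RtoC.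
  pose proof (Cnorm_ge0 z). apply Rplus_le_compat_l. apply Rmult_le_compat_l. apply Rabs_pos.
  apply Rmul_le; lra.
Qed.

Lemma dPh_norm s z : Cnorm (dPh gamma LL phi phi0 s z) =
  Cnorm (Ph gamma LL phi phi0 s z) * (Rabs s * (Rabs (gamma * LL) * (2 * Cnorm z))).
Proof.
  unfold dPh. rewrite !Cnorm_mul, Cnorm_opp, !Cnorm_mul, Cnorm_Cj, !Cnorm_RtoC.
  rewrite (Rabs_right 2) by lra. ring.
Qed.

Lemma qmono q Q m : 0 <= q <= Q -> q ^ m / INR (fact m) * exp (q * q) <= Q ^ m / INR (fact m) * exp (Q * Q).
Proof.
  intro H. apply Rmul_le. split. unfold Rdiv. apply Rmult_le_pos. apply pow_le; lra.
  left; apply Rinv_0_lt_compat, INR_fact_pos.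
  unfold Rdiv. apply Rmult_le_compat_r. left; apply Rinv_0_lt_compat, INR_fact_pos. apply pow_incr; auto.
  split. left; apply exp_pos. apply exp_mono. apply Rmul_le; lra.
Qed.

Lemma Kbe_arg_half be z : Cnorm (Cmul (Kbe be) (Cmul z (RtoC r))) / 2 = Cnorm be * Cnorm z * r.
Proof. unfold Kbe. rewrite !Cnorm_mul, !Cnorm_RtoC, !Rabs_right by lra. field. Qed.

Lemma Ibes_bound be m z X : Cnorm z <= X ->
  Cnorm (Ibes r be m z) <= (Cnorm be * X * r) ^ m / INR (fact m) * exp ((Cnorm be * X * r) * (Cnorm be * X * r)).
Proof.
  intro Hz. unfold Ibes. eapply Rle_trans. apply besselI_bound. rewrite Kbe_arg_half.
  apply qmono. pose proof (Cnorm_ge0 be). pose proof (Cnorm_ge0 z). split.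
  apply Rmult_le_pos; nra. apply Rmult_le_compat_r. lra. apply Rmult_le_compat_l; lra.
Qed.

Lemma dIbes_bound be m z X : Cnorm z <= X ->
  Cnorm (dIbes r be (S m) z) <= (Cnorm be * X * r) ^ m / INR (fact m) * exp ((Cnorm be * X * r) * (Cnorm be * X * r))
     * (2 * Cnorm be * r).
Proof.
  intro Hz. unfold dIbes. rewrite Cnorm_mul. apply Rmult_le_compat.
  apply Cnorm_ge0. apply Cnorm_ge0.
  eapply Rle_trans. apply dbesselI_bound. rewrite Kbe_arg_half.
  apply qmono. pose proof (Cnorm_ge0 be). pose proof (Cnorm_ge0 z). split.
  apply Rmult_le_pos; nra. apply Rmult_le_compat_r. lra. apply Rmult_le_compat_l; lra.
  unfold Kbe. rewrite !Cnorm_mul, !Cnorm_RtoC, !Rabs_right by lra. lra.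
Qed.

End Bounds.

Lemma sqrt_INR_ge1 m : (1 <= m)%nat -> 1 <= sqrt (INR m).
Proof. intro. rewrite <- sqrt_1. apply sqrt_le_1_alt. apply le_INR in H. simpl in H. lra. Qed.

Lemma sqrt_INR_le m : (1 <= m)%nat -> sqrt (INR m) <= INR m.
Proof.
  intro. pose proof (sqrt_INR_ge1 m H). pose proof (sqrt_sqrt (INR m) (pos_INR m)). nra.
Qed.

Section Seq.
Variables (gamma LL r phi phi0 : R).
Hypothesis hr : 0 < r.
Variables (al be : nat -> CC) (s : nat -> R) (Ka Kb : R).
Hypotheses (hKa : 0 <= Ka) (hKb : 0 <= Kb)
  (hal : forall m, (1 <= m)%nat -> Cnorm (al m) <= Ka * sqrt (INR m))
  (hbe : forall m, (1 <= m)%nat -> Cnorm (be m) <= Kb * sqrt (INR m))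
  (hs : forall m, (1 <= m)%nat -> Rabs (s m) <= INR m).

Variable X : R.
Hypothesis hX : 1 <= X.

Definition Acst := Kb * X * r + 1.
Definition ccst := Ka * (r*r + X*X) + Acst * Acst + (Rabs (phi - phi0) + Rabs (gamma * LL) * (X * X)).
Definition Gm (m : nat) := exp ccst ^ m * ((Acst * sqrt (INR m)) ^ m / INR (fact m)).

Lemma Acst_ge1 : 1 <= Acst.
Proof. unfold Acst. assert (0 <= Kb * X * r) by (apply Rmult_le_pos; [apply Rmult_le_pos|]; lra). lra. Qed.

Lemma q_le m : (1 <= m)%nat -> Cnorm (be m) * X * r <= Acst * sqrt (INR m).
Proof.
  intro Hm. pose proof (hbe m Hm). pose proof (sqrt_INR_ge1 m Hm). pose proof (Cnorm_ge0 (be m)).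
  unfold Acst. assert (Cnorm (be m) * X * r <= Kb * sqrt (INR m) * X * r).
  { apply Rmult_le_compat_r. lra. apply Rmult_le_compat_r; lra. }
  assert (0 <= Kb * X * r) by (apply Rmult_le_pos; [apply Rmult_le_pos|]; lra).
  nra.
Qed.

Lemma exps_le m z : (1 <= m)%nat -> Cnorm z <= X ->
  Cnorm (Eexp r (al m) z) * Cnorm (Ph gamma LL phi phi0 (s m) z) *
    exp ((Cnorm (be m) * X * r) * (Cnorm (be m) * X * r)) <= exp ccst ^ m.
Proof.
  intros Hm Hz.
  pose proof (Eexp_bound r (al m) z X Hz) as HE.
  pose proof (Ph_bound gamma LL phi phi0 (s m) z X Hz) as HP.
  pose proof (sqrt_INR_le m Hm). pose proof (sqrt_INR_ge1 m Hm).
  pose proof (hal m Hm). pose proof (hs m Hm). pose proof (q_le m Hm).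
  pose proof (Cnorm_ge0 (al m)). pose proof (Cnorm_ge0 (be m)). pose proof (Rabs_pos (s m)).
  pose proof (Rabs_pos (phi - phi0)). pose proof (Rabs_pos (gamma * LL)).
  pose proof Acst_ge1.
  assert (HR2 : 0 <= r * r + X * X) by nra.
  assert (HS1 : 0 <= Rabs (phi - phi0) + Rabs (gamma * LL) * (X * X)) by nra.
  rewrite <- exp_mul_pow. unfold ccst.
  replace (INR m * (Ka * (r * r + X * X) + Acst * Acst + (Rabs (phi - phi0) + Rabs (gamma * LL) * (X * X))))
    with (Ka * INR m * (r * r + X * X) + INR m * (Rabs (phi - phi0) + Rabs (gamma * LL) * (X * X))
          + (Acst * sqrt (INR m)) * (Acst * sqrt (INR m)))
    by (replace (Acst * sqrt (INR m) * (Acst * sqrt (INR m))) with (Acst * Acst * (sqrt (INR m) * sqrt (INR m))) by ring;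
        rewrite sqrt_sqrt by apply pos_INR; ring).
  rewrite !exp_plus.
  apply Rmul_le. split. apply Rmult_le_pos; apply Cnorm_ge0.
  apply Rmul_le. split. apply Cnorm_ge0. eapply Rle_trans. apply HE. apply exp_mono.
  apply Rmult_le_compat_r. auto. apply Rle_trans with (Ka * sqrt (INR m)). auto. apply Rmult_le_compat_l; auto.
  split. apply Cnorm_ge0. eapply Rle_trans. apply HP. apply exp_mono. apply Rmult_le_compat_r; auto.
  split. left; apply exp_pos. apply exp_mono. assert (0 <= Cnorm (be m) * X * r) by (apply Rmult_le_pos; [apply Rmult_le_pos|]; lra). apply Rmul_le; lra.
Qed.

Lemma core m z : (1 <= m)%nat -> Cnorm z <= X ->
  Cnorm (Eexp r (al m) z) * Cnorm (Ibes r (be m) m z) * Cnorm (Ph gamma LL phi phi0 (s m) z) <= Gm m.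
Proof.
  intros Hm Hz. pose proof (Ibes_bound r hr (be m) m z X Hz) as HI.
  pose proof (exps_le m z Hm Hz) as HX2.
  pose proof (q_le m Hm). pose proof (Cnorm_ge0 (be m)).
  set (q := Cnorm (be m) * X * r) in *.
  assert (Hq : 0 <= q) by (unfold q; apply Rmult_le_pos; [apply Rmult_le_pos|]; lra).
  assert (Hqq : q ^ m / INR (fact m) <= (Acst * sqrt (INR m)) ^ m / INR (fact m)).
  { unfold Rdiv. apply Rmult_le_compat_r. left; apply Rinv_0_lt_compat, INR_fact_pos. apply pow_incr. lra. }
  assert (0 <= q ^ m / INR (fact m)) by (unfold Rdiv; apply Rmult_le_pos; [apply pow_le; auto | left; apply Rinv_0_lt_compat, INR_fact_pos]).
  set (E := Cnorm (Eexp r (al m) z)) in *. set (P := Cnorm (Ph gamma LL phi phi0 (s m) z)) in *.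
  set (I := Cnorm (Ibes r (be m) m z)) in *.
  assert (0 <= E) by apply Cnorm_ge0. assert (0 <= P) by apply Cnorm_ge0. assert (0 <= I) by apply Cnorm_ge0.
  pose proof (exp_pos (q * q)).
  apply Rle_trans with (E * P * exp (q * q) * (q ^ m / INR (fact m))).
  { replace (E * P * exp (q * q) * (q ^ m / INR (fact m))) with (E * P * (q ^ m / INR (fact m) * exp (q * q))) by ring.
    replace (E * I * P) with (E * P * I) by ring. apply Rmult_le_compat_l. nra. auto. }
  unfold Gm. apply Rmul_le. split. apply Rmult_le_pos; [apply Rmult_le_pos|]; lra. auto. split; auto.
Qed.

Lemma core_d m z : Cnorm z <= X ->
  Cnorm (Eexp r (al (S m)) z) * Cnorm (dIbes r (be (S m)) (S m) z) * Cnorm (Ph gamma LL phi phi0 (s (S m)) z)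
    <= INR (S m) * (2 * (Kb * sqrt (INR (S m))) * r) * Gm (S m).
Proof.
  intros Hz. assert (Hm : (1 <= S m)%nat) by lia.
  pose proof (dIbes_bound r hr (be (S m)) m z X Hz) as HI.
  pose proof (exps_le (S m) z Hm Hz) as HX2.
  pose proof (q_le (S m) Hm). pose proof (Cnorm_ge0 (be (S m))). pose proof (hbe (S m) Hm).
  pose proof (sqrt_INR_ge1 (S m) Hm). pose proof Acst_ge1.
  set (sm := sqrt (INR (S m))) in *.
  set (q := Cnorm (be (S m)) * X * r) in *.
  assert (Hq : 0 <= q) by (unfold q; apply Rmult_le_pos; [apply Rmult_le_pos|]; lra).
  assert (HAs : 1 <= Acst * sm) by nra.
  assert (Hqq : q ^ m / INR (fact m) <= INR (S m) * ((Acst * sm) ^ (S m) / INR (fact (S m)))).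
  { change (fact (S m)) with (S m * fact m)%nat. rewrite mult_INR.
    pose proof (INR_fact_pos m). assert (0 < INR (S m)) by (apply lt_0_INR; lia).
    replace (INR (S m) * ((Acst * sm) ^ S m / (INR (S m) * INR (fact m)))) with
      ((Acst * sm) ^ S m / INR (fact m)) by (field; lra).
    unfold Rdiv. apply Rmult_le_compat_r. left; apply Rinv_0_lt_compat; auto.
    apply Rle_trans with ((Acst * sm) ^ m). apply pow_incr; lra.
    simpl. assert (0 <= (Acst * sm) ^ m) by (apply pow_le; lra). nra. }
  assert (0 <= q ^ m / INR (fact m)) by (unfold Rdiv; apply Rmult_le_pos; [apply pow_le; auto | left; apply Rinv_0_lt_compat, INR_fact_pos]).
  set (E := Cnorm (Eexp r (al (S m)) z)) in *. set (P := Cnorm (Ph gamma LL phi phi0 (s (S m)) z)) in *.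
  set (I := Cnorm (dIbes r (be (S m)) (S m) z)) in *.
  assert (0 <= E) by apply Cnorm_ge0. assert (0 <= P) by apply Cnorm_ge0. assert (0 <= I) by apply Cnorm_ge0.
  pose proof (exp_pos (q * q)).
  assert (Hb : 2 * Cnorm (be (S m)) * r <= 2 * (Kb * sm) * r) by (apply Rmult_le_compat_r; lra).
  apply Rle_trans with (E * P * exp (q * q) * (q ^ m / INR (fact m)) * (2 * (Kb * sm) * r)).
  { replace (E * P * exp (q * q) * (q ^ m / INR (fact m)) * (2 * (Kb * sm) * r)) with
      (E * P * (q ^ m / INR (fact m) * exp (q * q) * (2 * (Kb * sm) * r))) by ring.
    replace (E * I * P) with (E * P * I) by ring. apply Rmult_le_compat_l. nra.
    eapply Rle_trans. apply HI. apply Rmult_le_compat_l. nra. auto. }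
  unfold Gm. fold sm.
  assert (0 <= 2 * (Kb * sm) * r) by (apply Rmult_le_pos; [|lra]; nra).
  replace (INR (S m) * (2 * (Kb * sm) * r) * (exp ccst ^ S m * ((Acst * sm) ^ S m / INR (fact (S m)))))
    with (exp ccst ^ S m * (INR (S m) * ((Acst * sm) ^ S m / INR (fact (S m)))) * (2 * (Kb * sm) * r)) by ring.
  apply Rmult_le_compat_r. auto.
  apply Rmul_le. split. apply Rmult_le_pos; [apply Rmult_le_pos|]; lra. auto. split; auto.
Qed.

End Seq.

Lemma summable_ext_fun (A B : nat -> R) : summable A -> (forall k, A k = B k) -> summable B.
Proof. intros [l Hl] H. exists l. eapply Un_cv_ext. 2: apply Hl. intro n. apply Rsum_ext. auto. Qed.

Section Seq2.
Variables (gamma LL r phi phi0 : R).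
Hypothesis hr : 0 < r.
Variables (al be : nat -> CC) (s : nat -> R) (Ka Kb : R).
Hypotheses (hKa : 0 <= Ka) (hKb : 0 <= Kb)
  (hal : forall m, (1 <= m)%nat -> Cnorm (al m) <= Ka * sqrt (INR m))
  (hbe : forall m, (1 <= m)%nat -> Cnorm (be m) <= Kb * sqrt (INR m))
  (hs : forall m, (1 <= m)%nat -> Rabs (s m) <= INR m).

Definition GG X m := Gm gamma LL r phi phi0 Ka Kb X m.

Lemma GG_nonneg X m : 1 <= X -> 0 <= GG X m.
Proof.
  intro HX. unfold GG, Gm. pose proof (Acst_ge1 r hr Kb hKb X HX).
  apply Rmult_le_pos. apply pow_le. left; apply exp_pos.
  unfold Rdiv. apply Rmult_le_pos. apply pow_le. apply Rmult_le_pos. lra. apply sqrt_pos.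
  left; apply Rinv_0_lt_compat, INR_fact_pos.
Qed.

Lemma T_bound X m z : 1 <= X -> (1 <= m)%nat -> Cnorm z <= X ->
  Cnorm (T gamma LL r phi phi0 (al m) (be m) (s m) m z) <= (r * Kb) * (INR m * INR m) * GG X m.
Proof.
  intros HX Hm Hz.
  pose proof (core gamma LL r phi phi0 hr al be s Ka Kb hKa hKb hal hbe hs X HX m z Hm Hz) as Hc.
  unfold T. rewrite !Cnorm_mul, Cnorm_RtoC, Rabs_right by lra.
  pose proof (hbe m Hm). pose proof (sqrt_INR_le m Hm). pose proof (sqrt_INR_ge1 m Hm).
  pose proof (GG_nonneg X m HX). fold (GG X m) in Hc.
  set (E := Cnorm (Eexp r (al m) z)) in *. set (P := Cnorm (Ph gamma LL phi phi0 (s m) z)) in *.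
  set (I := Cnorm (Ibes r (be m) m z)) in *.
  assert (0 <= E) by apply Cnorm_ge0. assert (0 <= P) by apply Cnorm_ge0. assert (0 <= I) by apply Cnorm_ge0.
  pose proof (Cnorm_ge0 (be m)).
  replace (r * (Cnorm (be m) * (E * I)) * P) with (r * Cnorm (be m) * (E * I * P)) by ring.
  replace (r * Kb * (INR m * INR m) * GG X m) with (r * (Kb * (INR m * INR m)) * GG X m) by ring.
  apply Rmul_le. split. nra. apply Rmult_le_compat_l. lra.
  eapply Rle_trans. apply H. apply Rmult_le_compat_l. auto. nra.
  split. apply Rmult_le_pos; [apply Rmult_le_pos|]; auto. auto.
Qed.

Definition Kd X := r * Kb * (2 * Ka * X + 2 * Kb * r + 2 * Rabs (gamma * LL) * X).

Lemma dT_bound X m z : 1 <= X -> Cnorm z <= X ->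
  Cnorm (dT gamma LL r phi phi0 (al (S m)) (be (S m)) (s (S m)) (S m) z) <= Kd X * (INR (S m) * INR (S m) * INR (S m)) * GG X (S m).
Proof.
  intros HX Hz. assert (Hm : (1 <= S m)%nat) by lia.
  pose proof (core gamma LL r phi phi0 hr al be s Ka Kb hKa hKb hal hbe hs X HX (S m) z Hm Hz) as Hc.
  pose proof (core_d gamma LL r phi phi0 hr al be s Ka Kb hKa hKb hal hbe hs X HX m z Hz) as Hd.
  fold (GG X (S m)) in Hc, Hd.
  pose proof (hbe (S m) Hm). pose proof (hal (S m) Hm). pose proof (hs (S m) Hm).
  pose proof (sqrt_INR_le (S m) Hm). pose proof (sqrt_INR_ge1 (S m) Hm).
  pose proof (sqrt_sqrt (INR (S m)) (pos_INR _)).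
  pose proof (GG_nonneg X (S m) HX).
  set (mu := INR (S m)) in *. set (sm := sqrt mu) in *. set (G := GG X (S m)) in *.
  unfold dT. rewrite Cnorm_mul, Cnorm_mul, Cnorm_RtoC, Rabs_right by lra.
  eapply Rle_trans. apply Rmult_le_compat_l. apply Rmult_le_pos. lra. apply Cnorm_ge0.
  eapply Rle_trans. apply Cnorm_add. apply Rplus_le_compat_r. apply Cnorm_add.
  rewrite !Cnorm_mul, dEexp_norm, dPh_norm.
  set (E := Cnorm (Eexp r (al (S m)) z)) in *. set (P := Cnorm (Ph gamma LL phi phi0 (s (S m)) z)) in *.
  set (I := Cnorm (Ibes r (be (S m)) (S m) z)) in *. set (dI := Cnorm (dIbes r (be (S m)) (S m) z)) in *.
  assert (0 <= E) by apply Cnorm_ge0. assert (0 <= P) by apply Cnorm_ge0. assert (0 <= I) by apply Cnorm_ge0.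
  assert (0 <= dI) by apply Cnorm_ge0.
  pose proof (Cnorm_ge0 (be (S m))). pose proof (Cnorm_ge0 (al (S m))). pose proof (Cnorm_ge0 z).
  pose proof (Rabs_pos (s (S m))). pose proof (Rabs_pos (gamma * LL)).
  assert (HEIP : 0 <= E * I * P) by (apply Rmult_le_pos; [apply Rmult_le_pos|]; auto).
  assert (T1 : E * (Cnorm (al (S m)) * (2 * Cnorm z)) * I * P <= (2 * Ka * X) * mu * G).
  { replace (E * (Cnorm (al (S m)) * (2 * Cnorm z)) * I * P) with ((Cnorm (al (S m)) * (2 * Cnorm z)) * (E * I * P)) by ring.
    replace (2 * Ka * X * mu * G) with ((Ka * mu) * (2 * X) * G) by ring.
    apply Rmul_le. split. nra. apply Rmul_le. split. auto. eapply Rle_trans. apply H0.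
    apply Rmult_le_compat_l; lra. lra. split; auto. }
  assert (T2 : E * dI * P <= (2 * Kb * r) * (mu * mu) * G).
  { eapply Rle_trans. apply Hd. replace (mu * (2 * (Kb * sm) * r) * G) with (2 * Kb * r * (mu * sm) * G) by ring.
    apply Rmult_le_compat_r. auto. apply Rmult_le_compat_l. nra. apply Rmult_le_compat_l; lra. }
  assert (T3 : E * I * (P * (Rabs (s (S m)) * (Rabs (gamma * LL) * (2 * Cnorm z)))) <= (2 * Rabs (gamma * LL) * X) * mu * G).
  { replace (E * I * (P * (Rabs (s (S m)) * (Rabs (gamma * LL) * (2 * Cnorm z))))) with
      ((Rabs (s (S m)) * (Rabs (gamma * LL) * (2 * Cnorm z))) * (E * I * P)) by ring.
    replace (2 * Rabs (gamma * LL) * X * mu * G) with ((mu * (Rabs (gamma * LL) * (2 * X))) * G) by ring.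
    apply Rmul_le. split. apply Rmult_le_pos; auto. apply Rmult_le_pos; auto; lra.
    apply Rmul_le. split; auto. split. apply Rmult_le_pos; auto; lra. apply Rmult_le_compat_l; auto; lra.
    split; auto. }
  assert (Hsum : E * (Cnorm (al (S m)) * (2 * Cnorm z)) * I * P + E * dI * P +
     E * I * (P * (Rabs (s (S m)) * (Rabs (gamma * LL) * (2 * Cnorm z))))
     <= (2 * Ka * X + 2 * Kb * r + 2 * Rabs (gamma * LL) * X) * (mu * mu) * G).
  { assert (mu <= mu * mu) by nra.
    assert (0 <= 2 * Ka * X) by nra. assert (0 <= 2 * Rabs (gamma * LL) * X) by nra.
    assert (2 * Ka * X * mu * G <= 2 * Ka * X * (mu * mu) * G).
    { apply Rmult_le_compat_r; auto. apply Rmult_le_compat_l; auto. }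
    assert (2 * Rabs (gamma * LL) * X * mu * G <= 2 * Rabs (gamma * LL) * X * (mu * mu) * G).
    { apply Rmult_le_compat_r; auto. apply Rmult_le_compat_l; auto. }
    lra. }
  unfold Kd. fold mu G.
  set (SS := E * (Cnorm (al (S m)) * (2 * Cnorm z)) * I * P + E * dI * P +
     E * I * (P * (Rabs (s (S m)) * (Rabs (gamma * LL) * (2 * Cnorm z))))) in *.
  set (K' := 2 * Ka * X + 2 * Kb * r + 2 * Rabs (gamma * LL) * X) in *.
  assert (HK' : 0 <= K') by (unfold K'; nra).
  assert (HS : 0 <= SS) by (unfold SS; assert (0 <= E * dI * P) by (apply Rmult_le_pos; [apply Rmult_le_pos|]; auto);
     assert (0 <= E * (Cnorm (al (S m)) * (2 * Cnorm z)) * I * P) by (repeat apply Rmult_le_pos; auto; lra);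
     assert (0 <= E * I * (P * (Rabs (s (S m)) * (Rabs (gamma * LL) * (2 * Cnorm z))))) by (repeat apply Rmult_le_pos; auto; lra); lra).
  apply Rle_trans with ((r * (Kb * sm)) * (K' * (mu * mu) * G)).
  { apply Rmul_le. split. nra. apply Rmult_le_compat_l; lra. split; auto. }
  replace (r * (Kb * sm) * (K' * (mu * mu) * G)) with ((r * Kb * K' * (mu * mu) * G) * sm) by ring.
  replace (r * Kb * K' * (mu * mu * mu) * G) with ((r * Kb * K' * (mu * mu) * G) * mu) by ring.
  apply Rmult_le_compat_l; auto.
  assert (0 <= r * Kb) by nra. assert (0 <= mu * mu) by nra.
  assert (0 <= r*Kb*K') by (apply Rmult_le_pos; auto). apply Rmult_le_pos; [apply Rmult_le_pos|]; auto.
Qed.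

Lemma Bk_summable X : 1 <= X -> summable (fun k => INR (S k) * INR (S k) * INR (S k) * GG X (S k)).
Proof.
  intro HX. pose proof (Acst_ge1 r hr Kb hKb X HX).
  set (c := ccst gamma LL r phi phi0 Ka Kb X). set (A := Acst r Kb X) in *.
  apply summable_comp with (B := fun k => (8 * exp c * A * sqrt (INR (S k))) ^ (S k) / INR (fact (S k))).
  2: (apply key_summable; pose proof (exp_pos c); nra).
  intro k. set (m := S k). pose proof (pos_INR m). pose proof (GG_nonneg X m HX).
  split. apply Rmult_le_pos; auto. repeat apply Rmult_le_pos; auto.
  unfold GG, Gm. fold c A.
  assert (Hm3 : INR m * INR m * INR m <= 8 ^ m).
  { pose proof (INR_le_pow2 m). replace (8 ^ m) with (2 ^ m * 2 ^ m * 2 ^ m)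
      by (rewrite <- !Rpow_mult_distr; f_equal; ring).
    assert (0 <= INR m * INR m) by nra. apply Rmul_le. split; auto. apply Rmul_le; lra. lra. }
  replace ((8 * exp c * A * sqrt (INR m)) ^ m / INR (fact m)) with
    (8 ^ m * (exp c ^ m * ((A * sqrt (INR m)) ^ m / INR (fact m)))) by
    (unfold Rdiv; rewrite !Rpow_mult_distr; ring).
  apply Rmult_le_compat_r. apply GG_nonneg; auto. auto.
Qed.

Definition fT k z := T gamma LL r phi phi0 (al (S k)) (be (S k)) (s (S k)) (S k) z.
Definition fdT k z := dT gamma LL r phi phi0 (al (S k)) (be (S k)) (s (S k)) (S k) z.

Lemma fT_bounds : series_bounds fT.
Proof.
  intro M. set (X := Rabs M + 1). assert (HX : 1 <= X) by (unfold X; pose proof (Rabs_pos M); lra).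
  exists (fun k => (r * Kb) * (INR (S k) * INR (S k) * INR (S k) * GG X (S k))).
  assert (HrK : 0 <= r * Kb) by nra.
  split; [|split].
  - intro k. pose proof (pos_INR (S k)). pose proof (GG_nonneg X (S k) HX).
    apply Rmult_le_pos; auto. apply Rmult_le_pos; [apply Rmult_le_pos; [apply Rmult_le_pos|]|]; auto.
  - apply summable_scal, Bk_summable; auto.
  - intros k z Hz. unfold fT. eapply Rle_trans. apply (T_bound X (S k) z HX). lia.
    unfold X; pose proof (Rle_abs M); lra.
    pose proof (GG_nonneg X (S k) HX).
    assert (1 <= INR (S k)) by (apply (le_INR 1); lia).
    replace (INR (S k) * INR (S k) * INR (S k) * GG X (S k)) with ((INR (S k) * INR (S k) * GG X (S k)) * INR (S k)) by ring.
    rewrite Rmult_assoc. apply Rmult_le_compat_l. auto.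
    assert (0 <= INR (S k) * INR (S k) * GG X (S k)) by (apply Rmult_le_pos; auto; nra).
    nra.
Qed.

Lemma fdT_bounds : series_bounds fdT.
Proof.
  intro M. set (X := Rabs M + 1). assert (HX : 1 <= X) by (unfold X; pose proof (Rabs_pos M); lra).
  exists (fun k => Kd X * (INR (S k) * INR (S k) * INR (S k) * GG X (S k))).
  assert (HK : 0 <= Kd X).
  { unfold Kd. pose proof (Rabs_pos (gamma * LL)). apply Rmult_le_pos. nra. nra. }
  split; [|split].
  - intro k. pose proof (pos_INR (S k)). pose proof (GG_nonneg X (S k) HX).
    apply Rmult_le_pos; auto. apply Rmult_le_pos; [apply Rmult_le_pos; [apply Rmult_le_pos|]|]; auto.
  - apply summable_scal, Bk_summable; auto.
  - intros k z Hz. unfold fdT. eapply Rle_trans. apply (dT_bound X k z HX).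
    unfold X; pose proof (Rle_abs M); lra. right; ring.
Qed.

Lemma hasd_fT k z : hasd (fT k) z (fdT k z).
Proof. apply hasd_T. Qed.

End Seq2.

Lemma hasd_pRR0 sigma LL r z : exists l, hasd (pRR0 sigma LL r) z l.
Proof.
  unfold pRR0. eexists.
  apply hasd_scal. apply hasd_mul.
  - apply (hasd_comp Cexp (fun z => Cdiv (Copp (Cadd (RtoC (r * r)) (Cmul z z))) (RtoC (sigma * sigma * LL)))).
    apply (hasd_mul_const (fun z => Copp (Cadd (RtoC (r * r)) (Cmul z z)))).
    apply hasd_opp, hasd_add. apply hasd_const. apply hasd_sq. apply hasd_exp.
  - apply (hasd_comp (besselI 0) (fun z => Cdiv (Cmul (RtoC (2 * r)) z) (RtoC (sigma * sigma * LL)))).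
    apply (hasd_mul_const (fun z => Cmul (RtoC (2 * r)) z)). apply hasd_scal, hasd_id.
    apply hasd_besselI.
Qed.

Lemma hasd_entire_ex f : (forall z, exists l, hasd f z l) -> entire f.
Proof.
  intros H z0. destruct (H z0) as [l Hl]. exists l. intros eps He.
  destruct (Hl (eps/2) ltac:(lra)) as [d [Hd Hh]].
  exists d; split; auto. intros h [Hh0 Hhd]. specialize (Hh h Hhd).
  assert (h <> C0) by (intro; subst; rewrite Cnorm_C0 in Hh0; lra).
  replace (Csub (Cdiv (Csub (f (Cadd z0 h)) (f z0)) h) l) with
    (Cdiv (Csub (Csub (f (Cadd z0 h)) (f z0)) (Cmul l h)) h) by (field; auto).
  rewrite Cnorm_div. apply Rmult_lt_reg_r with (Cnorm h). auto.
  unfold Rdiv. rewrite Rmult_assoc, Rinv_l, Rmult_1_r by lra. nra.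
Qed.

Lemma C_cv_conj u l : C_cv u l -> C_cv (fun n => Cconj (u n)) (Cconj l).
Proof. intros H eps He. destruct (H eps He) as [N HN]. exists N. intros n Hn.
  rewrite <- Cconj_sub, Cnorm_conj. auto. Qed.

Lemma Sfun_conj f g z : series_bounds f -> (forall k, g k z = Cconj (f k z)) -> series_bounds g ->
  Sfun g z = Cconj (Sfun f z).
Proof.
  intros Hf Hgf Hg. apply (C_cv_unique (fun n => psum g n z)). apply series_cv; auto.
  intros eps He. destruct (C_cv_conj _ _ (series_cv f Hf z) eps He) as [N HN]. exists N.
  intros n Hn. specialize (HN n Hn). unfold psum in *.
  replace (Csum (fun k => g k z) n) with (Cconj (Csum (fun k => f k z) n)); auto.
  rewrite Cconj_Csum. apply Csum_ext. intro k. symmetry. auto.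
Qed.

Lemma Re_cv u l : C_cv u l -> Un_cv (fun n => Re (u n)) (Re l).
Proof. intros H eps He. destruct (H eps He) as [N HN]. exists N. intros n Hn.
  unfold R_dist. eapply Rle_lt_trans. 2: apply (HN n Hn). apply (Re_le (Csub (u n) l)). Qed.

Lemma T_conj gamma LL r phi phi0 al be s m x :
  Cconj (T gamma LL r phi phi0 al be s m (RtoC x)) = T gamma LL r phi phi0 (Cconj al) (Cconj be) (- s) m (RtoC x).
Proof.
  unfold T, Eexp, Ibes, Ph, phase, Kbe.
  rewrite !Cconj_mul, Cconj_RtoC, <- !Cexp_conj, <- besselI_conj.
  assert (E1 : Cconj (Copp (Cmul al (Cadd (RtoC (r*r)) (Cmul (RtoC x) (RtoC x))))) =
     Copp (Cmul (Cconj al) (Cadd (RtoC (r*r)) (Cmul (RtoC x) (RtoC x))))) by (apply CC_eq; simpl; ring).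
  assert (E2 : Cconj (Cmul (Cmul (RtoC 2) be) (Cmul (RtoC x) (RtoC r))) =
     Cmul (Cmul (RtoC 2) (Cconj be)) (Cmul (RtoC x) (RtoC r))) by (apply CC_eq; simpl; ring).
  assert (E3 : Cconj (Cmul (Cmul Cj (RtoC s)) (Csub (RtoC (phi - phi0)) (Cmul (RtoC (gamma * LL)) (Cmul (RtoC x) (RtoC x))))) =
     Cmul (Cmul Cj (RtoC (- s))) (Csub (RtoC (phi - phi0)) (Cmul (RtoC (gamma * LL)) (Cmul (RtoC x) (RtoC x))))) by (apply CC_eq; simpl; ring).
  rewrite E1, E2, E3. reflexivity.
Qed.

Lemma pRR0_conj sigma LL r x : Cconj (pRR0 sigma LL r (RtoC x)) = pRR0 sigma LL r (RtoC x).
Proof.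
  unfold pRR0. rewrite !Cconj_mul, Cconj_RtoC, <- !Cexp_conj, <- besselI_conj.
  assert (E1 : Cconj (Cdiv (Copp (Cadd (RtoC (r * r)) (Cmul (RtoC x) (RtoC x)))) (RtoC (sigma * sigma * LL))) =
     Cdiv (Copp (Cadd (RtoC (r * r)) (Cmul (RtoC x) (RtoC x)))) (RtoC (sigma * sigma * LL))).
  { rewrite Cconj_div, Cconj_opp, Cconj_add, Cconj_mul, !Cconj_RtoC. reflexivity. }
  assert (E2 : Cconj (Cdiv (Cmul (RtoC (2 * r)) (RtoC x)) (RtoC (sigma * sigma * LL))) =
     Cdiv (Cmul (RtoC (2 * r)) (RtoC x)) (RtoC (sigma * sigma * LL))).
  { rewrite Cconj_div, Cconj_mul, !Cconj_RtoC. reflexivity. }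
  rewrite E1, E2. reflexivity.
Qed.

Lemma real_of_conj w : Cconj w = w -> Im w = 0.
Proof. intro H. apply (f_equal Im) in H. simpl in H. lra. Qed.

Lemma Re_add a b : Re (Cadd a b) = Re a + Re b.
Proof. reflexivity. Qed.
Lemma Im_add a b : Im (Cadd a b) = Im a + Im b.
Proof. reflexivity. Qed.
Lemma Re_conj a : Re (Cconj a) = Re a.
Proof. reflexivity. Qed.
Lemma Im_conj a : Im (Cconj a) = - Im a.
Proof. reflexivity. Qed.
Lemma Im_RtoC_mul c a : Im (Cmul (RtoC c) a) = c * Im a.
Proof. simpl. ring. Qed.

Lemma Un_cv_const a : Un_cv (fun _ => a) a.
Proof. intros eps He. exists 0%nat. intros. unfold R_dist. rewrite Rminus_diag, Rabs_R0. lra. Qed.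

Theorem mainTheorem12 (gamma sigma LL r phi phi0 : R)
  (hgamma : 0 < gamma) (hsigma : 0 < sigma) (hL : 0 < LL) (hr : 0 < r)
  (hphi : 0 <= phi < 2 * PI) (hphi0 : 0 <= phi0 < 2 * PI) :
  exists (Sp Sn : CC -> CC),
    (forall M, unif_cv_disc (fun N z => psum_pos gamma sigma LL r phi phi0 z N) Sp M) /\
    (forall M, unif_cv_disc (fun N z => psum_neg gamma sigma LL r phi phi0 z N) Sn M) /\
    let s := fun z => Cmul (RtoC (/ (2 * PI)))
                 (Cadd (pRR0 sigma LL r z) (Cadd (Sp z) (Sn z))) in
    entire s /\
    forall r0, 0 <= r0 ->
      Un_cv (pzd_psum gamma sigma LL r phi phi0 r0) (Re (s (RtoC r0))) /\
      Im (s (RtoC r0)) = 0.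
Proof.
  set (al := a_coef gamma sigma LL). set (be := b_coef gamma sigma LL).
  set (sP := fun m : nat => INR m). set (sN := fun m : nat => - INR m).
  set (alN := fun m => Cconj (al m)). set (beN := fun m => Cconj (be m)).
  set (Kap := Ka gamma sigma LL). set (Kbp := Kb gamma sigma LL).
  assert (hKa : 0 <= Kap) by (left; apply Ka_pos; auto).
  assert (hKb : 0 <= Kbp) by (left; apply Kb_pos; auto).
  assert (hal : forall m, (1 <= m)%nat -> Cnorm (al m) <= Kap * sqrt (INR m)) by (intros; apply a_bound; auto).
  assert (hbe : forall m, (1 <= m)%nat -> Cnorm (be m) <= Kbp * sqrt (INR m)) by (intros; apply b_bound; auto).
  assert (halN : forall m, (1 <= m)%nat -> Cnorm (alN m) <= Kap * sqrt (INR m)) by (intros; unfold alN; rewrite Cnorm_conj; auto).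
  assert (hbeN : forall m, (1 <= m)%nat -> Cnorm (beN m) <= Kbp * sqrt (INR m)) by (intros; unfold beN; rewrite Cnorm_conj; auto).
  assert (hsP : forall m, (1 <= m)%nat -> Rabs (sP m) <= INR m) by (intros; unfold sP; rewrite Rabs_right; [lra | apply Rle_ge, pos_INR]).
  assert (hsN : forall m, (1 <= m)%nat -> Rabs (sN m) <= INR m) by (intros; unfold sN; rewrite Rabs_Ropp, Rabs_right; [lra | apply Rle_ge, pos_INR]).
  set (fP := fT gamma LL r phi phi0 al be sP).
  set (fN := fT gamma LL r phi phi0 alN beN sN).
  set (dP := fdT gamma LL r phi phi0 al be sP).
  set (dN := fdT gamma LL r phi phi0 alN beN sN).
  assert (BP : series_bounds fP) by (apply (fT_bounds gamma LL r phi phi0 hr al be sP Kap Kbp); auto).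
  assert (BN : series_bounds fN) by (apply (fT_bounds gamma LL r phi phi0 hr alN beN sN Kap Kbp); auto).
  assert (BdP : series_bounds dP) by (apply (fdT_bounds gamma LL r phi phi0 hr al be sP Kap Kbp); auto).
  assert (BdN : series_bounds dN) by (apply (fdT_bounds gamma LL r phi phi0 hr alN beN sN Kap Kbp); auto).
  exists (Sfun fP), (Sfun fN).
  split; [|split].
  - intro M. exact (series_unif fP BP M).
  - intro M. exact (series_unif fN BN M).
  - intro s. split.
    + apply hasd_entire_ex. intro z. destruct (hasd_pRR0 sigma LL r z) as [l0 H0].
      eexists. unfold s.
      apply (hasd_scal _ (fun w => Cadd (pRR0 sigma LL r w) (Cadd (Sfun fP w) (Sfun fN w)))).
      apply (hasd_add (pRR0 sigma LL r) (fun w => Cadd (Sfun fP w) (Sfun fN w))). exact H0.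
      apply (hasd_add (Sfun fP) (Sfun fN)).
      * apply (ST fP dP); auto. intros; apply hasd_fT.
      * apply (ST fN dN); auto. intros; apply hasd_fT.
    + intros r0 Hr0.
      assert (HSN : Sfun fN (RtoC r0) = Cconj (Sfun fP (RtoC r0))).
      { apply Sfun_conj; auto. intro k. unfold fN, fP, fT. rewrite T_conj. reflexivity. }
      assert (Hp : Im (pRR0 sigma LL r (RtoC r0)) = 0).
      { apply real_of_conj. apply pRR0_conj. }
      unfold s. rewrite HSN. split.
      * set (p := pRR0 sigma LL r (RtoC r0)). set (SP := Sfun fP (RtoC r0)).
        assert (Hcv : Un_cv (fun N => Re (psum fP N (RtoC r0))) (Re SP)) by (apply Re_cv, series_cv; auto).
        assert (HPI : PI <> 0) by (pose proof PI_RGT_0; lra).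
        replace (Re (Cmul (RtoC (/ (2 * PI))) (Cadd p (Cadd SP (Cconj SP))))) with
          (Re p / (2 * PI) + / PI * Re SP) by (rewrite Re_RtoC_mul, !Re_add, Re_conj; field; auto).
        unfold pzd_psum. fold p.
        eapply Un_cv_ext. 2: apply CV_plus. 2: apply Un_cv_const. 2: apply Un_cv_scal; apply Hcv.
        intro n. simpl. unfold Rdiv. rewrite (Rmult_comm (Re _)). reflexivity.
      * rewrite Im_RtoC_mul, !Im_add, Im_conj, Hp. ring.
Qed.
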